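(* Fix one of the two variants $\sharp\in\{\text{lumped},\text{exact}\}$ described in the context. Suppose $\partial_0I=\emptyset$, let $\vec X^m\in\underline V^h$ satisfy assumption $(\mathfrak A)$, and let $0<\Delta t_m<3\min_{\overline I}(\vec X^m\cdot\vec e_1)^2$. Then there exists a pair $(\delta\vec X^{m+1},\vec\kappa^{m+1})\in\underline V^h_\partial\times\underline V^h$ such that, with $\vec X^{m+1}=\vec X^m+\delta\vec X^{m+1}$, $$\Big(\vec X^m\cdot\vec e_1\,\tfrac{\vec X^{m+1}-\vec X^m}{\Delta t_m},\vec\chi\,|\vec X^m_\rho|\Big)_\sharp=\Big((\vec X^m\cdot\vec e_1)\vec\kappa^{m+1},\vec\chi\,|\vec X^m_\rho|\Big)_\sharp\quad\forall\,\vec\chi\in\underline V^h,$$ $$\Big((\vec X^m\cdot\vec e_1)\vec\kappa^{m+1},\vec\eta\,|\vec X^m_\rho|\Big)_\sharp+\big(\vec\eta\cdot\vec e_1,|\vec X^{m+1}_\rho|\big)+\Big((\vec X^m\cdot\vec e_1)\vec X^{m+1}_\rho,\vec\eta_\rho|\vec X^m_\rho|^{-1}\Big)$$ $$=-\sum_{p\in\partial_1I}\widehat\varrho^{(p)}(\vec X^m(p)\cdot\vec e_1)\,\vec\eta(p)\cdot\vec e_2-\sum_{p\in\partial_2I}\Big(\big([\widehat\varrho^{(p)}]_+\vec X^{m+1}(p)+[\widehat\varrho^{(p)}]_-\vec X^m(p)\big)\cdot\vec e_1\Big)\,\vec\eta(p)\cdot\vec e_1\quad\forall\,\vec\eta\in\underline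 V^h_\partial .$$
   Context: Setup. $\vec e_1=(1,0)^T$, $\vec e_2=(0,1)^T$; ''$\cdot$'' is the Euclidean inner product; $[r]_+=\max\{r,0\}$, $[r]_-=-\max\{-r,0\}$. $I$ is either the periodic interval $\mathbb R/\mathbb Z$ (with $\partial I=\emptyset$) or $I=(0,1)$ (with $\partial I=\{0,1\}$). $\partial I=\partial_DI\cup\partial_0I\cup\partial_1I\cup\partial_2I$ is a given disjoint partition, and $\widehat\varrho^{(p)}\in\mathbb R$, $p\in\{0,1\}$, are given constants with $|\widehat\varrho^{(p)}|\le1$. Let $J\ge3$, $h=1/J$, $q_j=jh$ ($j=0,\dots,J$; $q_0=q_J$ identified in the periodic case). $V^h$ is the space of continuous functions on $\overline I$ (periodic if $I=\mathbb R/\mathbb Z$) that are affine on each $[q_{j-1},q_j]$; $\underline V^h=[V^h]^2$; $\underline V^h_\partial=\{\vec\eta\in\underline V^h:\vec\eta(\rho)\cdot\vec e_1=0\ \forall\rho\in\partial_0I;\ \vec\eta(\rho)\cdot\vec e_i=0\ \forall\rho\in\partial_iI,\ i=1,2;\ \vec\eta(\rho)=\vec0\ \forall\rho\in\partial_DI\}$. $(\cdot,\cdot)$ is the $L^2(I)$ inner product (with dot product for vector functions), and for piecewise continuous $f,g$ the mass-lumped product is $(f,g)^h=\tfrac h2\sum_{j=1}^J[(fg)(q_j^-)+(fg)(q_{j-1}^+)]$. Two variants: in the ''lumped'' variant $(\cdot,\cdot)_\sharp=(\cdot,\cdot)^h$; in the ''exact'' variant $(\cdot,\cdot)_\sharp=(\cdot,\cdot)$.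 Assumption $(\mathfrak A)$: $|\vec X^m_\rho|>0$ a.e. on $I$ and $\vec X^m(\rho)\cdot\vec e_1>0$ for all $\rho\in\overline I\setminus\partial_0I$. *)

(* Defs.v *)
From Stdlib Require Import Reals Lra Lia ClassicalEpsilon.
Open Scope R_scope.

Definition vec := (R * R)%type.
Definition vadd (u v : vec) : vec := (fst u + fst v, snd u + snd v).
Definition vsub (u v : vec) : vec := (fst u - fst v, snd u - snd v).
Definition vscal (a : R) (u : vec) : vec := (a * fst u, a * snd u).
Definition vdot (u v : vec) : R := fst u * fst v + snd u * snd v.
Definition vnorm (u : vec) : R := sqrt (vdot u u).
Definition e1 : vec := (1, 0).
Definition e2 : vec := (0, 1).

Definition rpos (r : R) : R := Rmax r 0.
Definition rneg (r : R) : R := - Rmax (- r) 0.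

Definition hh (J : nat) : R := 1 / INR J.
Definition q (J j : nat) : R := INR j / INR J.

Fixpoint rsum (n : nat) (f : nat -> R) : R :=
  match n with
  | O => 0
  | S k => rsum k f + f (S k)
  end.

(* A function of V^h is given by its nodal values X 0, ..., X J
   (values at indices > J are irrelevant); in the periodic case X 0 = X J. *)
Definition inVh (per : bool) (J : nat) (X : nat -> vec) : Prop :=
  per = true -> X 0%nat = X J.

(* value of the piecewise affine function on element [q_{j-1}, q_j] (1 <= j <= J) *)
Definition interp (J : nat) (X : nat -> vec) (j : nat) (rho : R) : vec :=
  vadd (X (pred j))
       (vscal ((rho - q J (pred j)) / hh J) (vsub (X j) (X (pred j)))).

Definition deriv (J : nat) (X : nat -> vec) (j : nat) : vec :=
  vscal (1 / hh J) (vsub (X j) (X (pred j))).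

(* Riemann integral over [a,b] (the value, for Riemann-integrable f). *)
Definition Rint (f : R -> R) (a b : R) : R :=
  epsilon (inhabits 0)
    (fun v => exists pr : Riemann_integrable f a b, RiemannInt pr = v).

(* A piecewise continuous integrand is given elementwise: F j is the
   (continuous) restriction to the closed element [q_{j-1}, q_j]. *)
Definition ip_exact (J : nat) (F : nat -> R -> R) : R :=
  rsum J (fun j => Rint (F j) (q J (pred j)) (q J j)).

(* mass-lumped inner product (.,.)^h : one-sided limits q_j^- and q_{j-1}^+
   are the values of the elementwise continuous restrictions *)
Definition ip_lumped (J : nat) (F : nat -> R -> R) : R :=
  hh J / 2 * rsum J (fun j => F j (q J j) + F j (q J (pred j))).

Definition ip_sharp (lumped : bool) (J : nat) (F : nat -> R -> R) : R :=
  if lumped then ip_lumped J F else ip_exact J F.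

(* boundary points p in {0,1} are encoded by a bool: false = 0, true = 1 *)
Inductive bctype := BcD | Bc0 | Bc1 | Bc2.
Definition bnode (J : nat) (p : bool) : nat := if p then J else 0%nat.

(* p belongs to d_k I (only possible when I = (0,1), i.e. per = false) *)
Definition inbd (per : bool) (bc : bool -> bctype) (k : bctype) (p : bool) : Prop :=
  per = false /\ bc p = k.

Definition in_d0 (per : bool) (bc : bool -> bctype) (rho : R) : Prop :=
  exists p : bool, inbd per bc Bc0 p /\ rho = (if p then 1 else 0).

Definition inVhd (per : bool) (bc : bool -> bctype) (J : nat) (eta : nat -> vec) : Prop :=
  inVh per J eta /\
  forall p : bool,
    (inbd per bc Bc0 p -> vdot (eta (bnode J p)) e1 = 0) /\
    (inbd per bc Bc1 p -> vdot (eta (bnode J p)) e1 = 0) /\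
    (inbd per bc Bc2 p -> vdot (eta (bnode J p)) e2 = 0) /\
    (inbd per bc BcD p -> eta (bnode J p) = (0, 0)).

Definition assumptionA (per : bool) (bc : bool -> bctype) (J : nat) (X : nat -> vec) : Prop :=
  (forall j, (1 <= j <= J)%nat -> vnorm (deriv J X j) > 0) /\
  (forall j rho, (1 <= j <= J)%nat -> q J (pred j) <= rho <= q J j ->
     ~ in_d0 per bc rho -> vdot (interp J X j rho) e1 > 0).

Definition is_min_sq (J : nat) (X : nat -> vec) (m : R) : Prop :=
  (exists j rho, (1 <= j <= J)%nat /\ q J (pred j) <= rho <= q J j /\
     m = (vdot (interp J X j rho) e1) ^ 2) /\
  (forall j rho, (1 <= j <= J)%nat -> q J (pred j) <= rho <= q J j ->
     m <= (vdot (interp J X j rho) e1) ^ 2).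

Definition bsum (per : bool) (bc : bool -> bctype) (k : bctype) (g : bool -> R) : R :=
  (if per then 0 else
     (match bc false, k with
      | BcD, BcD | Bc0, Bc0 | Bc1, Bc1 | Bc2, Bc2 => g false | _, _ => 0 end) +
     (match bc true, k with
      | BcD, BcD | Bc0, Bc0 | Bc1, Bc1 | Bc2, Bc2 => g true | _, _ => 0 end)).

(* Main.v *)
From Stdlib Require Import Reals Lra Lia Psatz ClassicalEpsilon FunctionalExtensionality.
From Coquelicot Require Import Coquelicot.
Require Import Defs.
Open Scope R_scope.

Definition is_cub (f : R -> R) := exists c0 c1 c2 c3, forall x, f x = c0 + c1*x + c2*x^2 + c3*x^3.
Definition is_quad (f : R -> R) := exists c0 c1 c2, forall x, f x = c0 + c1*x + c2*x^2.
Definition is_aff (f : R -> R) := exists c0 c1, forall x, f x = c0 + c1*x.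

Lemma aff_mul f g : is_aff f -> is_aff g -> is_quad (fun x => f x * g x).
Proof. intros [a [b Hf]] [c [d Hg]]. exists (a*c), (a*d+b*c), (b*d). intro x. rewrite Hf, Hg. ring. Qed.
Lemma quad_plus f g : is_quad f -> is_quad g -> is_quad (fun x => f x + g x).
Proof. intros [a [b [c Hf]]] [a' [b' [c' Hg]]]. exists (a+a'), (b+b'), (c+c'). intro x. rewrite Hf, Hg. ring. Qed.
Lemma quad_mul_aff f g : is_quad f -> is_aff g -> is_cub (fun x => f x * g x).
Proof. intros [a [b [c Hf]]] [d [e Hg]]. exists (a*d), (a*e+b*d), (b*e+c*d), (c*e). intro x. rewrite Hf, Hg. ring. Qed.
Lemma aff_cub f : is_aff f -> is_cub f.
Proof. intros [a [b Hf]]. exists a, b, 0, 0. intro x. rewrite Hf. ring. Qed.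
Lemma aff_scal f K : is_aff f -> is_aff (fun x => f x * K).
Proof. intros [a [b Hf]]. exists (a*K), (b*K). intro x. rewrite Hf. ring. Qed.
Lemma cub_ext f g : (forall x, f x = g x) -> is_cub g -> is_cub f.
Proof. intros H [a [b [c [d Hg]]]]. exists a, b, c, d. intro x. rewrite H, Hg. auto. Qed.
Lemma aff_ext f g : (forall x, f x = g x) -> is_aff g -> is_aff f.
Proof. intros H [a [b Hg]]. exists a, b. intro x. rewrite H, Hg. auto. Qed.

Lemma aff_interp1 J X j : is_aff (fun r => fst (interp J X j r)).
Proof. unfold interp, vadd, vscal, vsub; simpl.
  exists (fst (X (pred j)) - q J (pred j) / hh J * (fst (X j) - fst (X (pred j)))),
    ((fst (X j) - fst (X (pred j))) / hh J). intro x. unfold Rdiv. ring. Qed.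
Lemma aff_interp2 J X j : is_aff (fun r => snd (interp J X j r)).
Proof. unfold interp, vadd, vscal, vsub; simpl.
  exists (snd (X (pred j)) - q J (pred j) / hh J * (snd (X j) - snd (X (pred j)))),
    ((snd (X j) - snd (X (pred j))) / hh J). intro x. unfold Rdiv. ring. Qed.

Lemma quad_vdot J X Y j : is_quad (fun r => vdot (interp J X j r) (interp J Y j r)).
Proof. unfold vdot. apply quad_plus; apply aff_mul; (apply aff_interp1 || apply aff_interp2). Qed.

Lemma cub_FA J X Y Z j K :
  is_cub (fun r => fst (interp J X j r) * vdot (interp J Y j r) (interp J Z j r) * K).
Proof.
  apply cub_ext with (g := fun r => vdot (interp J Y j r) (interp J Z j r) * (fst (interp J X j r) * K)).
  - intro; ring.
  - apply quad_mul_aff. apply quad_vdot. apply aff_scal, aff_interp1.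
Qed.

Lemma cub_FB J X j K : is_cub (fun r => vdot (interp J X j r) e1 * K).
Proof.
  apply aff_cub. apply aff_ext with (g := fun r => fst (interp J X j r) * K).
  - intro; unfold vdot, e1; simpl; ring.
  - apply aff_scal, aff_interp1.
Qed.

Lemma cub_FC J X j K K' : is_cub (fun r => fst (interp J X j r) * K / K').
Proof.
  apply aff_cub. apply aff_ext with (g := fun r => fst (interp J X j r) * (K / K')).
  - intro; unfold Rdiv; ring.
  - apply aff_scal, aff_interp1.
Qed.
Lemma Rint_cubic (f : R->R) a b c0 c1 c2 c3 : a <= b ->
  (forall x, f x = c0 + c1*x + c2*x^2 + c3*x^3) ->
  Rint f a b = (b-a)/6*(f a + 4*f((a+b)/2) + f b).
Proof.
  intros Hab Hf.
  set (F := fun x => c0*x + c1*x^2/2 + c2*x^3/3 + c3*x^4/4).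
  assert (Hd : is_RInt f a b (F b - F a)).
  { replace f with (fun x => c0 + c1*x + c2*x^2 + c3*x^3)
      by (apply functional_extensionality; intro; now rewrite Hf).
    apply (is_RInt_derive F).
    - intros x _. unfold F. auto_derive; trivial. field.
    - intros x _. apply (ex_derive_continuous (fun x0 => c0 + c1 * x0 + c2 * x0 ^ 2 + c3 * x0 ^ 3)). auto_derive; trivial. }
  assert (Hex : ex_RInt f a b) by (eexists; exact Hd).
  pose (pr := ex_RInt_Reals_0 _ _ _ Hex).
  assert (Hv : RiemannInt pr = F b - F a).
  { rewrite <- RInt_Reals. now apply is_RInt_unique. }
  unfold Rint.
  assert (HP : exists v, (fun v => exists pr : Riemann_integrable f a b, RiemannInt pr = v) v)
    by (exists (F b - F a); exists pr; exact Hv).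
  destruct (epsilon_spec (inhabits 0) _ HP) as [pr' Hpr'].
  rewrite <- Hpr', (RiemannInt_P5 pr' pr), Hv.
  rewrite !Hf. unfold F. field.
Qed.

Lemma Rint_cub f a b : a <= b -> is_cub f ->
  Rint f a b = (b-a)/6*(f a + 4*f((a+b)/2) + f b).
Proof. intros H [c0 [c1 [c2 [c3 Hf]]]]. now apply (Rint_cubic f a b c0 c1 c2 c3). Qed.

Lemma rsum_ext n f g : (forall j, (1 <= j <= n)%nat -> f j = g j) -> rsum n f = rsum n g.
Proof. induction n; intros H; simpl; auto. rewrite IHn by (intros; apply H; lia). rewrite H by lia. auto. Qed.
Lemma rsum_plus n f g : rsum n (fun j => f j + g j) = rsum n f + rsum n g.
Proof. induction n; simpl; [ring|rewrite IHn; ring]. Qed.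
Lemma rsum_scal n c f : rsum n (fun j => c * f j) = c * rsum n f.
Proof. induction n; simpl; [ring|rewrite IHn; ring]. Qed.
Lemma rsum_minus n f g : rsum n (fun j => f j - g j) = rsum n f - rsum n g.
Proof. induction n; simpl; [ring|rewrite IHn; ring]. Qed.
Lemma rsum_le n f g : (forall j, (1 <= j <= n)%nat -> f j <= g j) -> rsum n f <= rsum n g.
Proof. induction n; intros H; simpl; [lra|]. assert (H1 := H (S n) ltac:(lia)).
  assert (rsum n f <= rsum n g) by (apply IHn; intros; apply H; lia). lra. Qed.

Definition sum0 n (f : nat -> R) := f O + rsum n f.
Lemma sum0_ext n f g : (forall j, (j <= n)%nat -> f j = g j) -> sum0 n f = sum0 n g.
Proof. intros H; unfold sum0. rewrite H by lia. rewrite (rsum_ext n f g) by (intros; apply H; lia). auto. Qed.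
Lemma sum0_plus n f g : sum0 n (fun j => f j + g j) = sum0 n f + sum0 n g.
Proof. unfold sum0; rewrite rsum_plus; ring. Qed.
Lemma sum0_scal n c f : sum0 n (fun j => c * f j) = c * sum0 n f.
Proof. unfold sum0; rewrite rsum_scal; ring. Qed.
Lemma sum0_minus n f g : sum0 n (fun j => f j - g j) = sum0 n f - sum0 n g.
Proof. unfold sum0; rewrite rsum_minus; ring. Qed.
Lemma sum0_le n f g : (forall j, (j <= n)%nat -> f j <= g j) -> sum0 n f <= sum0 n g.
Proof. intros H; unfold sum0. assert (f O <= g O) by (apply H; lia).
  assert (rsum n f <= rsum n g) by (apply rsum_le; intros; apply H; lia). lra. Qed.
Lemma sum0_ge_term n f k : (forall j, (j <= n)%nat -> 0 <= f j) -> (k <= n)%nat -> f k <= sum0 n f.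
Proof.
  induction n; intros H Hk.
  - unfold sum0; simpl. replace k with O by lia. lra.
  - unfold sum0 in *; simpl.
    assert (0 <= f (S n)) by (apply H; lia).
    destruct (Nat.eq_dec k (S n)) as [->|Hne].
    + assert (0 <= f O + rsum n f).
      { change (0 <= sum0 n f). apply Rle_trans with (sum0 n (fun _ => 0)).
        unfold sum0; clear; induction n; simpl; lra.
        apply sum0_le; intros; apply H; lia. }
      lra.
    + assert (f k <= f O + rsum n f) by (apply IHn; [intros; apply H; lia | lia]). lra.
Qed.
Lemma sum0_shift n g : sum0 n g = rsum (S n) (fun j => g (pred j)).
Proof. induction n; unfold sum0 in *; simpl in *; [ring|]. rewrite <- IHn. simpl. ring. Qed.

Lemma INR_J_pos J : (1 <= J)%nat -> 0 < INR J.
Proof. intros; apply lt_0_INR; lia. Qed.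
Lemma hh_pos J : (1 <= J)%nat -> 0 < hh J.
Proof. intros; unfold hh. apply Rdiv_lt_0_compat; [lra|apply INR_J_pos; auto]. Qed.
Lemma q_diff J j : (1 <= J)%nat -> (1 <= j)%nat -> q J j - q J (pred j) = hh J.
Proof. intros HJ Hj. unfold q, hh. replace j with (S (pred j)) at 1 by lia. rewrite S_INR.
  assert (0 < INR J) by (apply INR_J_pos; auto). field. lra. Qed.

Lemma interp_t J X j r t : (r - q J (pred j)) / hh J = t ->
  interp J X j r = (fst (X (pred j)) + t * (fst (X j) - fst (X (pred j))),
                    snd (X (pred j)) + t * (snd (X j) - snd (X (pred j)))).
Proof. intros H. unfold interp, vadd, vscal, vsub. rewrite H. reflexivity. Qed.

Lemma pair_eta (v : vec) : v = (fst v, snd v).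
Proof. destruct v; auto. Qed.

Lemma interp_left J X j : (1 <= J)%nat -> interp J X j (q J (pred j)) = X (pred j).
Proof. intros HJ. rewrite (interp_t J X j _ 0).
  - apply injective_projections; simpl; ring.
  - unfold Rdiv. ring. Qed.
Lemma interp_right J X j : (1 <= J)%nat -> (1 <= j)%nat -> interp J X j (q J j) = X j.
Proof. intros HJ Hj. rewrite (interp_t J X j _ 1).
  - apply injective_projections; simpl; ring.
  - rewrite q_diff by auto. assert (0 < hh J) by (apply hh_pos; auto). field. lra. Qed.
Definition vmid (u v : vec) : vec := vscal (1/2) (vadd u v).
Lemma interp_mid J X j : (1 <= J)%nat -> (1 <= j)%nat ->
  interp J X j ((q J (pred j) + q J j)/2) = vmid (X (pred j)) (X j).
Proof. intros HJ Hj. rewrite (interp_t J X j _ (1/2)).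
  - unfold vmid, vscal, vadd. f_equal; simpl; field.
  - replace ((q J (pred j) + q J j) / 2 - q J (pred j)) with ((q J j - q J (pred j))/2) by field.
    rewrite q_diff by auto. assert (0 < hh J) by (apply hh_pos; auto). field. lra. Qed.

Lemma q_le J j : (1 <= J)%nat -> (1 <= j)%nat -> q J (pred j) <= q J j.
Proof. intros H1 H2. assert (H := q_diff J j H1 H2). assert (0 < hh J) by (apply hh_pos; auto). lra. Qed.

Section Main.
Variables (lumped per : bool) (bc : bool -> bctype) (varrho : bool -> R) (J : nat) (Xm : nat -> vec) (dt : R).

Definition X1 (D : nat -> vec) := fun i => vadd (Xm i) (D i).
Definition sj j := vnorm (deriv J Xm j).
Definition xa j := fst (Xm (pred j)).
Definition xb j := fst (Xm j).
Definition xm j := (xa j + xb j)/2.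
Definition massT (D : nat -> vec) j (a b : vec) :=
  if lumped then hh J/2*(sj j/dt)*(xb j * vdot (D j) b + xa j * vdot (D (pred j)) a)
  else hh J/6*(sj j/dt)*(xa j * vdot (D (pred j)) a + 4*xm j*vdot (vmid (D (pred j)) (D j)) (vmid a b)
                         + xb j * vdot (D j) b).
Definition bT D j (a b : vec) := hh J/2*(fst a + fst b)*vnorm (deriv J (X1 D) j).
Definition cT D j (a b : vec) := hh J * xm j * vdot (deriv J (X1 D) j) (vscal (1/hh J) (vsub b a)) / sj j.
Definition Eloc D j a b := massT D j a b + bT D j a b + cT D j a b.

Lemma bridge (HJ : (1 <= J)%nat) (D eta : nat -> vec) :
  ip_sharp lumped J (fun j rho => fst (interp J Xm j rho) *
         vdot (interp J (fun i => vscal (1/dt) (D i)) j rho) (interp J eta j rho) * vnorm (deriv J Xm j))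
  + ip_exact J (fun j rho => vdot (interp J eta j rho) e1 * vnorm (deriv J (fun i => vadd (Xm i) (D i)) j))
  + ip_exact J (fun j rho => fst (interp J Xm j rho) *
         vdot (deriv J (fun i => vadd (Xm i) (D i)) j) (deriv J eta j) / vnorm (deriv J Xm j))
  = rsum J (fun j => Eloc D j (eta (pred j)) (eta j)).
Proof.
  assert (HA : ip_sharp lumped J (fun j rho => fst (interp J Xm j rho) *
         vdot (interp J (fun i => vscal (1/dt) (D i)) j rho) (interp J eta j rho) * vnorm (deriv J Xm j))
     = rsum J (fun j => massT D j (eta (pred j)) (eta j))).
  { unfold ip_sharp, massT. destruct lumped.
    - unfold ip_lumped. rewrite <- rsum_scal. apply rsum_ext; intros j Hj.
      rewrite !interp_right, !interp_left by lia. unfold vdot, vscal, xa, xb, sj. simpl. unfold Rdiv. ring.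
    - unfold ip_exact. apply rsum_ext; intros j Hj.
      rewrite Rint_cub; [| apply q_le; lia | apply cub_FA].
      rewrite q_diff by lia. rewrite !interp_right, !interp_left, !interp_mid by lia.
      unfold vdot, vscal, vmid, vadd, xm, xa, xb, sj. simpl. unfold Rdiv. set (idt := / dt). field. }
  assert (HB : ip_exact J (fun j rho => vdot (interp J eta j rho) e1 * vnorm (deriv J (fun i => vadd (Xm i) (D i)) j))
     = rsum J (fun j => bT D j (eta (pred j)) (eta j))).
  { unfold ip_exact. apply rsum_ext; intros j Hj.
    rewrite Rint_cub; [| apply q_le; lia | apply cub_FB].
    rewrite q_diff by lia. rewrite !interp_right, !interp_left, !interp_mid by lia.
    unfold bT, X1. set (n1 := vnorm (deriv J (fun i => vadd (Xm i) (D i)) j)). unfold vdot, vscal, vmid, vadd, e1. simpl. field. }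
  assert (HC : ip_exact J (fun j rho => fst (interp J Xm j rho) *
         vdot (deriv J (fun i => vadd (Xm i) (D i)) j) (deriv J eta j) / vnorm (deriv J Xm j))
     = rsum J (fun j => cT D j (eta (pred j)) (eta j))).
  { unfold ip_exact. apply rsum_ext; intros j Hj.
    rewrite Rint_cub; [| apply q_le; lia | apply cub_FC].
    rewrite q_diff by lia. rewrite !interp_right, !interp_left, !interp_mid by lia.
    unfold cT, X1. change (vscal (1 / hh J) (vsub (eta j) (eta (pred j)))) with (deriv J eta j). set (K := vdot _ _). unfold xm, xa, xb, sj, vmid, vscal, vadd. simpl. unfold Rdiv. set (is := / vnorm _). field. }
  rewrite HA, HB, HC, <- !rsum_plus. apply rsum_ext; intros; unfold Eloc; ring.
Qed.

Definition Lc D j : vec := (Eloc D j e1 (0,0), Eloc D j e2 (0,0)).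
Definition Rc D j : vec := (Eloc D j (0,0) e1, Eloc D j (0,0) e2).

Lemma Eloc_lin D j a b : Eloc D j a b = vdot (Lc D j) a + vdot (Rc D j) b.
Proof.
  unfold Lc, Rc, Eloc, massT, bT, cT.
  set (d1 := deriv J (X1 D) j). set (n1 := vnorm d1). clearbody n1 d1.
  destruct a as [a1 a2], b as [b1 b2], d1 as [d11 d12].
  unfold Rdiv. set (i1 := / dt). set (i2 := / sj j). set (i3 := / hh J). clearbody i1 i2 i3.
  destruct lumped; unfold vdot, vscal, vsub, vmid, vadd, e1, e2; simpl; field.
Qed.

Definition Bloc D (a0 aJ : vec) :=
  bsum per bc Bc1 (fun p => varrho p * vdot (Xm (bnode J p)) e1 * vdot (if p then aJ else a0) e2)
  + bsum per bc Bc2 (fun p => vdot (vadd (vscal (rpos (varrho p)) (X1 D (bnode J p)))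
                                      (vscal (rneg (varrho p)) (Xm (bnode J p)))) e1
                              * vdot (if p then aJ else a0) e1).
Definition B0 D : vec := (Bloc D e1 (0,0), Bloc D e2 (0,0)).
Definition BJ D : vec := (Bloc D (0,0) e1, Bloc D (0,0) e2).

Lemma Bloc_lin D a0 aJ : Bloc D a0 aJ = vdot (B0 D) a0 + vdot (BJ D) aJ.
Proof.
  unfold B0, BJ, Bloc, bsum. destruct a0, aJ.
  destruct per, (bc false), (bc true); unfold vdot, e1, e2; simpl; ring.
Qed.

Definition Phi D (eta : nat -> vec) :=
  rsum J (fun j => Eloc D j (eta (pred j)) (eta j)) + Bloc D (eta O) (eta J).

Definition Gv D k : vec :=
  vadd (vadd (if (k <? J)%nat then Lc D (S k) else (0,0)) (if (1 <=? k)%nat then Rc D k else (0,0)))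
       (vadd (if (k =? 0)%nat then B0 D else (0,0)) (if (k =? J)%nat then BJ D else (0,0))).

End Main.

Definition ipS J (F G : nat -> vec) := sum0 J (fun k => vdot (F k) (G k)).

Lemma rsum_zero n f : (forall j, (1 <= j <= n)%nat -> f j = 0) -> rsum n f = 0.
Proof. intros H. rewrite (rsum_ext n f (fun _ => 0)) by auto. clear. induction n; simpl; lra. Qed.
Lemma sum0_S n f : sum0 (S n) f = sum0 n f + f (S n).
Proof. unfold sum0; simpl; ring. Qed.
Lemma vdot_add_l u v w : vdot (vadd u v) w = vdot u w + vdot v w.
Proof. unfold vdot, vadd; simpl; ring. Qed.
Lemma vdot_0_l w : vdot (0,0) w = 0.
Proof. unfold vdot; simpl; ring. Qed.

Lemma Phi_G lumped per bc varrho J Xm dt D eta : (1 <= J)%nat ->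
  Phi lumped per bc varrho J Xm dt D eta = ipS J (Gv lumped per bc varrho J Xm dt D) eta.
Proof.
  intros HJ. unfold ipS, Gv.
  set (L := Lc lumped J Xm dt D). set (Rr := Rc lumped J Xm dt D).
  set (b0 := B0 per bc varrho J Xm D). set (bJ := BJ per bc varrho J Xm D).
  rewrite (sum0_ext J _ (fun k => (vdot (if (k <? J)%nat then L (S k) else (0,0)) (eta k)
       + vdot (if (1 <=? k)%nat then Rr k else (0,0)) (eta k))
       + (vdot (if (k =? 0)%nat then b0 else (0,0)) (eta k)
       + vdot (if (k =? J)%nat then bJ else (0,0)) (eta k))))
    by (intros; rewrite !vdot_add_l; auto).
  rewrite !sum0_plus.
  assert (E1 : sum0 J (fun k => vdot (if (k <? J)%nat then L (S k) else (0,0)) (eta k))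
               = rsum J (fun j => vdot (L j) (eta (pred j)))).
  { destruct J as [|J']; [lia|]. rewrite sum0_S.
    replace ((S J' <? S J')%nat) with false by (symmetry; apply Nat.ltb_ge; lia).
    rewrite vdot_0_l, Rplus_0_r.
    rewrite (sum0_ext J' _ (fun k => vdot (L (S k)) (eta k))).
    2:{ intros k Hk. replace ((k <? S J')%nat) with true by (symmetry; apply Nat.ltb_lt; lia). auto. }
    rewrite sum0_shift. apply rsum_ext. intros j Hj. replace (S (pred j)) with j by lia. auto. }
  assert (E2 : sum0 J (fun k => vdot (if (1 <=? k)%nat then Rr k else (0,0)) (eta k))
               = rsum J (fun j => vdot (Rr j) (eta j))).
  { unfold sum0. replace ((1 <=? 0)%nat) with false by reflexivity.
    rewrite vdot_0_l, Rplus_0_l. apply rsum_ext. intros j Hj.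
    destruct j as [|j']; [lia|]. reflexivity. }
  assert (E3 : sum0 J (fun k => vdot (if (k =? 0)%nat then b0 else (0,0)) (eta k)) = vdot b0 (eta O)).
  { unfold sum0. replace ((0 =? 0)%nat) with true by reflexivity.
    rewrite rsum_zero; [ring|]. intros j Hj.
    destruct j as [|j']; [lia|]. apply vdot_0_l. }
  assert (E4 : sum0 J (fun k => vdot (if (k =? J)%nat then bJ else (0,0)) (eta k)) = vdot bJ (eta J)).
  { destruct J as [|J']; [lia|]. rewrite sum0_S. rewrite Nat.eqb_refl.
    rewrite (sum0_ext J' _ (fun _ => 0)).
    - unfold sum0. rewrite rsum_zero; [ring|auto].
    - intros k Hk. replace ((k =? S J')%nat) with false by (symmetry; apply Nat.eqb_neq; lia). apply vdot_0_l. }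
  rewrite E1, E2, E3, E4. unfold Phi. rewrite Bloc_lin.
  rewrite (rsum_ext J _ (fun j => vdot (L j) (eta (pred j)) + vdot (Rr j) (eta j)))
    by (intros; apply Eloc_lin).
  rewrite rsum_plus. fold b0 bJ. ring.
Qed.
Lemma geo_partial (u : nat -> R) A q : 0 <= q < 1 ->
  (forall n, Rabs (u (S n) - u n) <= A * q^n) ->
  forall n m, Rabs (u (n+m)%nat - u n) <= A * q^n / (1-q).
Proof.
  intros Hq H n m.
  assert (HA : 0 <= A). { specialize (H O). simpl in H. assert (0 <= Rabs (u 1%nat - u O)) by apply Rabs_pos. lra. }
  assert (Hm : Rabs (u (n+m)%nat - u n) <= A * q^n * (1 - q^m) / (1-q)).
  { induction m.
    - rewrite Nat.add_0_r. unfold Rminus at 1. rewrite Rplus_opp_r, Rabs_R0. simpl.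
      replace (A * q ^ n * (1 - 1) / (1 - q)) with 0 by (field; lra). lra.
    - replace (n + S m)%nat with (S (n + m)) by lia.
      eapply Rle_trans. { replace (u (S (n+m)) - u n) with ((u (S (n+m)) - u (n+m)%nat) + (u (n+m)%nat - u n)) by ring. apply Rabs_triang. }
      specialize (H (n+m)%nat). rewrite pow_add in H.
      apply Rle_trans with (A * (q ^ n * q ^ m) + A * q ^ n * (1 - q ^ m) / (1 - q)); [lra|].
      right. simpl. field. lra. }
  eapply Rle_trans; [exact Hm|].
  unfold Rdiv. apply Rmult_le_compat_r. { apply Rlt_le, Rinv_0_lt_compat. lra. }
  assert (0 <= q^m) by (apply pow_le; lra). assert (0 <= A * q^n) by (apply Rmult_le_pos; [lra|apply pow_le; lra]).
  nra.
Qed.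

Lemma pow_small q e : 0 <= q < 1 -> 0 < e -> exists N, forall n, (N <= n)%nat -> q^n < e.
Proof.
  intros Hq He. destruct (pow_lt_1_zero q ltac:(rewrite Rabs_pos_eq; lra) e He) as [N HN].
  exists N. intros n Hn. specialize (HN n Hn). rewrite Rabs_pos_eq in HN by (apply pow_le; lra). auto.
Qed.

Lemma geo_lim (u : nat -> R) A q : 0 <= q < 1 ->
  (forall n, Rabs (u (S n) - u n) <= A * q^n) ->
  forall n, Rabs (u n - real (Lim_seq u)) <= A * q^n / (1-q).
Proof.
  intros Hq H.
  assert (HA : 0 <= A). { specialize (H O). simpl in H. assert (0 <= Rabs (u 1%nat - u O)) by apply Rabs_pos. lra. }
  assert (Hp := geo_partial u A q Hq H).
  assert (Hex : ex_finite_lim_seq u).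
  { apply ex_lim_seq_cauchy_corr. intros eps.
    destruct (pow_small q (eps * (1-q) / (2*(A+1))) Hq) as [N HN].
    { apply Rdiv_lt_0_compat; [apply Rmult_lt_0_compat; [apply cond_pos|lra]|lra]. }
    exists N. intros n m Hn Hm.
    assert (H1 := Hp N (n - N)%nat). assert (H2 := Hp N (m - N)%nat).
    replace (N + (n - N))%nat with n in H1 by lia. replace (N + (m - N))%nat with m in H2 by lia.
    specialize (HN N (le_n N)).
    assert (Hs : A * q^N < eps * / 2 * (1-q)).
    { assert (0 <= q^N) by (apply pow_le; lra).
      assert (A * q^N <= (A+1) * q^N) by nra.
      assert (Hk3 : (A+1) * q^N < (A+1) * (eps * (1 - q) / (2 * (A + 1)))) by (apply Rmult_lt_compat_l; lra).
      replace ((A+1) * (eps * (1 - q) / (2 * (A + 1)))) with (eps * / 2 * (1-q)) in Hk3 by (field; lra).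
      lra. }
    assert (A * q ^ N / (1 - q) < eps / 2).
    { apply Rmult_lt_reg_r with (1-q); [lra|].
      replace (A * q ^ N / (1 - q) * (1 - q)) with (A * q^N) by (field; lra). lra. }
    replace (u n - u m) with ((u n - u N) - (u m - u N)) by ring.
    eapply Rle_lt_trans; [apply Rabs_triang|]. rewrite Rabs_Ropp. lra. }
  destruct Hex as [l Hl]. rewrite (is_lim_seq_unique _ _ Hl). simpl.
  intros n.
  assert (Hl' : is_lim_seq (fun m => u (m + n)%nat) l) by (apply (is_lim_seq_incr_n u n l); auto).
  assert (Hd : is_lim_seq (fun m => Rabs (u (m+n)%nat - u n)) (Rbar_abs (l - u n))).
  { apply is_lim_seq_abs. apply is_lim_seq_minus'; [exact Hl'|apply is_lim_seq_const]. }
  assert (Hle := is_lim_seq_le _ _ _ _ (fun m => Rle_trans _ _ _ (Req_le _ _ (f_equal (fun t => Rabs (u t - u n)) (Nat.add_comm m n))) (Hp n m)) Hd (is_lim_seq_const (A * q^n / (1-q)))).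
  simpl in Hle. rewrite <- Rabs_Ropp. replace (- (u n - l)) with (l - u n) by ring. exact Hle.
Qed.

Lemma zero_of_geo x K q : 0 <= q < 1 -> (forall n, Rabs x <= K * q^n) -> x = 0.
Proof.
  intros Hq H. destruct (Req_dec x 0) as [|Hx]; auto. exfalso.
  assert (Hax : 0 < Rabs x) by (apply Rabs_pos_lt; auto).
  assert (HK : Rabs x <= K) by (specialize (H O); simpl in H; lra).
  destruct (pow_small q (Rabs x / (K+1)) Hq) as [N HN]. { apply Rdiv_lt_0_compat; lra. }
  specialize (HN N (le_n N)). specialize (H N).
  assert (0 <= q^N) by (apply pow_le; lra).
  assert (K * q^N <= K * (Rabs x / (K + 1))) by (apply Rmult_le_compat_l; lra).
  assert (K * (Rabs x / (K + 1)) < Rabs x).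
  { apply Rmult_lt_reg_r with (K+1); [lra|]. replace (K * (Rabs x / (K + 1)) * (K + 1)) with (K * Rabs x) by (field; lra). nra. }
  lra.
Qed.

Definition Sn J (F : nat -> vec) := sum0 J (fun k => vdot (F k) (F k)).
Definition vdiff (F G : nat -> vec) := fun k => vsub (F k) (G k).

Lemma vdot_self_nonneg v : 0 <= vdot v v.
Proof. unfold vdot. nra. Qed.
Lemma Sn_nonneg J F : 0 <= Sn J F.
Proof. unfold Sn. apply Rle_trans with (sum0 J (fun _ => 0)).
  - unfold sum0. rewrite rsum_zero; auto; lra.
  - apply sum0_le. intros; apply vdot_self_nonneg. Qed.

Lemma comp_bound J F k : (k <= J)%nat ->
  Rabs (fst (F k)) <= sqrt (Sn J F) /\ Rabs (snd (F k)) <= sqrt (Sn J F).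
Proof.
  intros Hk.
  assert (H : vdot (F k) (F k) <= Sn J F) by (apply (sum0_ge_term J (fun k => vdot (F k) (F k))); auto; intros; apply vdot_self_nonneg).
  unfold vdot in H. split.
  - rewrite <- sqrt_Rsqr_abs. apply sqrt_le_1_alt. unfold Rsqr. nra.
  - rewrite <- sqrt_Rsqr_abs. apply sqrt_le_1_alt. unfold Rsqr. nra.
Qed.

Lemma sqrt_pow_n c n : 0 <= c -> sqrt (c^n) = (sqrt c)^n.
Proof. intros Hc. induction n; simpl. apply sqrt_1. rewrite sqrt_mult_alt by auto. rewrite IHn. auto. Qed.

Lemma sum0_const n c : sum0 n (fun _ => c) = INR (S n) * c.
Proof. induction n. unfold sum0; simpl; ring. rewrite sum0_S, IHn. rewrite (S_INR (S n)). ring. Qed.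

Lemma banach J (T : (nat -> vec) -> (nat -> vec)) c : 0 <= c < 1 ->
  (forall D E, Sn J (vdiff (T D) (T E)) <= c * Sn J (vdiff D E)) ->
  (forall D k, (J < k)%nat -> T D k = (0,0)) ->
  exists D, T D = D.
Proof.
  intros Hc HT Hz.
  set (Dn := fun n => Nat.iter n T (fun _ => (0,0))).
  assert (HDn : forall n, Dn (S n) = T (Dn n)) by (intros; reflexivity).
  set (d0 := Sn J (vdiff (Dn 1%nat) (Dn O))).
  assert (Hstep : forall n, Sn J (vdiff (Dn (S n)) (Dn n)) <= c^n * d0).
  { induction n. rewrite pow_O, Rmult_1_l. apply Rle_refl.
    rewrite (HDn (S n)), (HDn n). eapply Rle_trans; [apply HT|]. rewrite <- HDn. simpl.
    assert (0 <= c) by lra. rewrite Rmult_assoc. apply Rmult_le_compat_l; auto. }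
  set (q := sqrt c). set (A := sqrt d0).
  assert (Hq : 0 <= q < 1).
  { split. apply sqrt_pos. unfold q. rewrite <- sqrt_1. apply sqrt_lt_1_alt. lra. }
  assert (Hinc : forall n k, (k <= J)%nat ->
     Rabs (fst (Dn (S n) k) - fst (Dn n k)) <= A * q^n /\ Rabs (snd (Dn (S n) k) - snd (Dn n k)) <= A * q^n).
  { intros n k Hk. destruct (comp_bound J (vdiff (Dn (S n)) (Dn n)) k Hk) as [H1 H2].
    assert (sqrt (Sn J (vdiff (Dn (S n)) (Dn n))) <= A * q^n).
    { unfold A, q. rewrite <- sqrt_pow_n by lra. rewrite Rmult_comm, <- sqrt_mult_alt by (apply pow_le; lra).
      apply sqrt_le_1_alt. auto. }
    split; [apply (Rle_trans _ _ _ H1 H) | apply (Rle_trans _ _ _ H2 H)]. }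
  set (e := fun n => A * q^n / (1-q)).
  set (Ds := fun k => if (k <=? J)%nat then (real (Lim_seq (fun n => fst (Dn n k))), real (Lim_seq (fun n => snd (Dn n k)))) else (0,0)).
  assert (Hlim : forall n k, (k <= J)%nat -> Rabs (fst (Dn n k) - fst (Ds k)) <= e n /\ Rabs (snd (Dn n k) - snd (Ds k)) <= e n).
  { intros n k Hk. unfold Ds. replace ((k <=? J)%nat) with true by (symmetry; apply Nat.leb_le; auto). simpl.
    split; apply (geo_lim (fun n => _ (Dn n k)) A q Hq); intros m; apply (Hinc m k Hk). }
  assert (He : forall n, 0 <= e n).
  { intros n. unfold e. apply Rmult_le_pos. apply Rmult_le_pos. apply sqrt_pos. apply pow_le; lra. apply Rlt_le, Rinv_0_lt_compat; lra. }
  assert (HS : forall n, Sn J (vdiff Ds (Dn n)) <= INR (S J) * (2 * (e n)^2)).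
  { intros n. rewrite <- sum0_const. apply sum0_le. intros k Hk. destruct (Hlim n k Hk) as [H1 H2].
    unfold vdiff, vsub, vdot; simpl. rewrite <- Rabs_Ropp in H1, H2.
    replace (- (fst (Dn n k) - fst (Ds k))) with (fst (Ds k) - fst (Dn n k)) in H1 by ring.
    replace (- (snd (Dn n k) - snd (Ds k))) with (snd (Ds k) - snd (Dn n k)) in H2 by ring.
    assert (Ha := Rsqr_le_abs_1 _ _ (Rle_trans _ _ _ H1 (Req_le _ _ (eq_sym (Rabs_pos_eq _ (He n)))))).
    assert (Hb := Rsqr_le_abs_1 _ _ (Rle_trans _ _ _ H2 (Req_le _ _ (eq_sym (Rabs_pos_eq _ (He n)))))).
    unfold Rsqr in Ha, Hb. simpl. lra. }
  exists Ds. apply functional_extensionality. intros k.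
  destruct (Nat.le_gt_cases k J) as [Hk|Hk].
  2:{ rewrite Hz by auto. unfold Ds. replace ((k <=? J)%nat) with false by (symmetry; apply Nat.leb_gt; auto). auto. }
  set (K := (sqrt (INR (S J) * 2) + 1) * A / (1-q)).
  assert (Hmain : forall n, Rabs (fst (T Ds k) - fst (Ds k)) <= K * q^n /\ Rabs (snd (T Ds k) - snd (Ds k)) <= K * q^n).
  { intros n.
    destruct (comp_bound J (vdiff (T Ds) (T (Dn n))) k Hk) as [H1 H2].
    assert (Hs : sqrt (Sn J (vdiff (T Ds) (T (Dn n)))) <= sqrt (INR (S J) * 2) * e n).
    { rewrite <- (Rabs_pos_eq (e n)) by auto. rewrite <- sqrt_Rsqr_abs, <- sqrt_mult_alt.
      2:{ apply Rmult_le_pos; [apply pos_INR|lra]. }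
      apply sqrt_le_1_alt. eapply Rle_trans; [apply HT|].
      eapply Rle_trans. apply Rmult_le_compat_l; [lra|apply HS].
      assert (0 <= INR (S J) * (2 * e n ^ 2)) by (apply Rmult_le_pos; [apply pos_INR| assert (0 <= e n ^2) by (apply pow2_ge_0); lra]).
      unfold Rsqr. replace (e n ^ 2) with (e n * e n) in * by ring. assert (0 <= INR (S J)) by apply pos_INR. assert (0 <= e n * e n) by nra. nra. }
    assert (He1 : e (S n) <= e n).
    { unfold e. simpl. unfold Rdiv. apply Rmult_le_compat_r. apply Rlt_le, Rinv_0_lt_compat; lra.
      assert (0 <= A * q^n) by (apply Rmult_le_pos; [apply sqrt_pos|apply pow_le; lra]). nra. }
    assert (H1' := Rle_trans _ _ _ H1 Hs). assert (H2' := Rle_trans _ _ _ H2 Hs). clear H1 H2.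
    unfold vdiff, vsub in H1', H2'; cbn [fst snd] in H1', H2'. rewrite <- HDn in H1', H2'.
    destruct (Hlim (S n) k Hk) as [H3 H4].
    assert (HKe : sqrt (INR (S J) * 2) * e n + e n = K * q^n) by (unfold K, e; field; lra).
    split.
    - replace (fst (T Ds k) - fst (Ds k)) with ((fst (T Ds k) - fst (Dn (S n) k)) + (fst (Dn (S n) k) - fst (Ds k))) by ring.
      eapply Rle_trans; [apply Rabs_triang|]. lra.
    - replace (snd (T Ds k) - snd (Ds k)) with ((snd (T Ds k) - snd (Dn (S n) k)) + (snd (Dn (S n) k) - snd (Ds k))) by ring.
      eapply Rle_trans; [apply Rabs_triang|]. lra. }
  apply injective_projections.
  - apply Rminus_diag_uniq. apply (zero_of_geo _ K q Hq). intros n; apply Hmain.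
  - apply Rminus_diag_uniq. apply (zero_of_geo _ K q Hq). intros n; apply Hmain.
Qed.
Lemma amgm_neg h s sg t nd dl : 0 < h -> 0 < s -> 0 < sg -> Rabs nd <= dl ->
  h/2*t*nd >= -(h*sg*dl^2/s + h*s*t^2/(16*sg)).
Proof.
  intros Hh Hs Hsg Hnd.
  assert (H1 : -(h/2*Rabs t*dl) <= h/2*t*nd).
  { assert (Rabs (h/2*t*nd) <= h/2*Rabs t*dl).
    { rewrite !Rabs_mult. rewrite (Rabs_pos_eq (h/2)) by lra. apply Rmult_le_compat_l.
      apply Rmult_le_pos; [lra|apply Rabs_pos]. auto. }
    assert (H' := Rle_abs (-(h/2*t*nd))). rewrite Rabs_Ropp in H'. lra. }
  assert (H2 : h*sg*dl^2/s + h*s*t^2/(16*sg) - h/2*Rabs t*dl = h*(4*sg*dl - s*Rabs t)^2/(16*sg*s)).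
  { replace (t^2) with (Rabs t ^2) by apply pow2_abs. field. lra. }
  assert (0 <= h*(4*sg*dl - s*Rabs t)^2/(16*sg*s)).
  { apply Rmult_le_pos. apply Rmult_le_pos; [lra|apply pow2_ge_0]. apply Rlt_le, Rinv_0_lt_compat; nra. }
  lra.
Qed.

Lemma elem_ineq (lumped : bool) h s dt sg xa xb a1 a2 b1 b2 dl nd :
  0 < h -> 0 < s -> 0 < dt -> 0 < sg -> sg <= xa -> sg <= xb -> dt <= 3*sg^2 -> Rabs nd <= dl ->
  (if lumped then h/2*(s/dt)*(xb*(b1*b1+b2*b2) + xa*(a1*a1+a2*a2))
   else h/6*(s/dt)*(xa*(a1*a1+a2*a2) + 4*((xa+xb)/2)*((1/2*(a1+b1))*(1/2*(a1+b1)) + (1/2*(a2+b2))*(1/2*(a2+b2)))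
                    + xb*(b1*b1+b2*b2)))
  + h/2*(a1+b1)*nd + h*((xa+xb)/2)*dl^2/s
  >= h*s*sg/(24*dt)*(a1*a1+a2*a2+b1*b1+b2*b2).
Proof.
  intros Hh Hs Hdt Hsg Hxa Hxb Hdt3 Hnd.
  set (t := a1 + b1). set (P := a1*a1+a2*a2+b1*b1+b2*b2).
  assert (HP : 0 <= P) by (unfold P; pose proof (pow2_ge_0 a1); pose proof (pow2_ge_0 a2); pose proof (pow2_ge_0 b1); pose proof (pow2_ge_0 b2); nra).
  assert (Ht2 : t^2 <= 2*P) by (unfold t, P; pose proof (pow2_ge_0 (a1-b1)); pose proof (pow2_ge_0 a2); pose proof (pow2_ge_0 b2); nra).
  assert (HB := amgm_neg h s sg t nd dl Hh Hs Hsg Hnd).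
  assert (HC : h*sg*dl^2/s <= h*((xa+xb)/2)*dl^2/s).
  { unfold Rdiv. apply Rmult_le_compat_r. apply Rlt_le, Rinv_0_lt_compat; lra.
    apply Rmult_le_compat_r. apply pow2_ge_0. apply Rmult_le_compat_l; lra. }
  assert (Hu : 1/(3*sg) <= sg/dt).
  { apply Rmult_le_reg_r with (3*sg*dt). nra.
    replace (1/(3*sg)*(3*sg*dt)) with dt by (field; lra).
    replace (sg/dt*(3*sg*dt)) with (3*sg^2) by (field; lra). lra. }
  assert (Hhs : 0 < h*s) by nra.
  destruct lumped.
  - assert (HM : h*s*(sg/dt)/2*P <= h/2*(s/dt)*(xb*(b1*b1+b2*b2) + xa*(a1*a1+a2*a2))).
    { assert (0 <= b1*b1+b2*b2) by (apply Rplus_le_le_0_compat; apply Rle_0_sqr). assert (0 <= a1*a1+a2*a2) by (apply Rplus_le_le_0_compat; apply Rle_0_sqr).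
      assert (sg*(b1*b1+b2*b2) <= xb*(b1*b1+b2*b2)) by nra.
      assert (sg*(a1*a1+a2*a2) <= xa*(a1*a1+a2*a2)) by nra.
      replace (h/2*(s/dt)*(xb*(b1*b1+b2*b2) + xa*(a1*a1+a2*a2))) with (h*s/dt/2*(xb*(b1*b1+b2*b2) + xa*(a1*a1+a2*a2))) by (field; lra).
      replace (h*s*(sg/dt)/2*P) with (h*s/dt/2*(sg*P)) by (field; lra).
      apply Rmult_le_compat_l. apply Rmult_le_pos; [|lra]. apply Rlt_le, Rdiv_lt_0_compat; lra.
      unfold P; lra. }
    assert (Hgoal : h*s*sg/(24*dt)*P + h*s*t^2/(16*sg) <= h*s*(sg/dt)/2*P).
    { replace (h*s*sg/(24*dt)*P) with (h*s*(sg/dt)/24*P) by (field; lra).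
      assert (h*s*t^2/(16*sg) <= h*s*(1/(3*sg))*(3/8)*P).
      { replace (h*s*t^2/(16*sg)) with (h*s*(1/(3*sg))*(3/16)*t^2) by (field; lra).
        assert (0 <= h*s*(1/(3*sg))) by (apply Rmult_le_pos; [lra|apply Rlt_le, Rdiv_lt_0_compat; lra]). nra. }
      assert (h*s*(1/(3*sg))*(3/8)*P <= h*s*(sg/dt)*(3/8)*P).
      { apply Rmult_le_compat_r; [lra|]. apply Rmult_le_compat_r; [lra|]. apply Rmult_le_compat_l; lra. }
      assert (0 <= h*s*(sg/dt)*P) by (apply Rmult_le_pos; [apply Rmult_le_pos; [lra|apply Rlt_le, Rdiv_lt_0_compat; lra]|lra]).
      lra. }
    fold t. lra.
  - 
    assert (HM : h*s*(sg/dt)/6*(P + t^2) <= h/6*(s/dt)*(xa*(a1*a1+a2*a2) + 4*((xa+xb)/2)*((1/2*(a1+b1))*(1/2*(a1+b1)) + (1/2*(a2+b2))*(1/2*(a2+b2))) + xb*(b1*b1+b2*b2))).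
    { assert (0 <= b1*b1+b2*b2) by (apply Rplus_le_le_0_compat; apply Rle_0_sqr). assert (0 <= a1*a1+a2*a2) by (apply Rplus_le_le_0_compat; apply Rle_0_sqr).
      assert (Hm : 0 <= (1/2*(a1+b1))*(1/2*(a1+b1)) + (1/2*(a2+b2))*(1/2*(a2+b2))) by (apply Rplus_le_le_0_compat; apply Rle_0_sqr).
      assert (sg*(b1*b1+b2*b2) <= xb*(b1*b1+b2*b2)) by nra.
      assert (sg*(a1*a1+a2*a2) <= xa*(a1*a1+a2*a2)) by nra.
      assert (sg*((1/2*(a1+b1))*(1/2*(a1+b1)) + (1/2*(a2+b2))*(1/2*(a2+b2))) <= ((xa+xb)/2)*((1/2*(a1+b1))*(1/2*(a1+b1)) + (1/2*(a2+b2))*(1/2*(a2+b2)))).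
      { apply Rmult_le_compat_r; lra. }
      replace (h/6*(s/dt)*(xa*(a1*a1+a2*a2) + 4*((xa+xb)/2)*((1/2*(a1+b1))*(1/2*(a1+b1)) + (1/2*(a2+b2))*(1/2*(a2+b2))) + xb*(b1*b1+b2*b2)))
        with (h*s/dt/6*(xa*(a1*a1+a2*a2) + 4*(((xa+xb)/2)*((1/2*(a1+b1))*(1/2*(a1+b1)) + (1/2*(a2+b2))*(1/2*(a2+b2)))) + xb*(b1*b1+b2*b2))) by (field; lra).
      replace (h*s*(sg/dt)/6*(P + t^2)) with (h*s/dt/6*(sg*(P + t^2))) by (field; lra).
      apply Rmult_le_compat_l. apply Rmult_le_pos; [|lra]. apply Rlt_le, Rdiv_lt_0_compat; lra.
      assert (sg * (P + t^2) <= sg*(a1*a1+a2*a2) + 4*(sg*((1/2*(a1+b1))*(1/2*(a1+b1)) + (1/2*(a2+b2))*(1/2*(a2+b2)))) + sg*(b1*b1+b2*b2)).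
      { assert (0 <= sg * (a2+b2)^2) by (apply Rmult_le_pos; [lra|apply pow2_ge_0]).
        replace (sg*(a1*a1+a2*a2) + 4*(sg*((1/2*(a1+b1))*(1/2*(a1+b1)) + (1/2*(a2+b2))*(1/2*(a2+b2)))) + sg*(b1*b1+b2*b2))
          with (sg*(P+t^2) + sg*(a2+b2)^2) by (unfold P, t; field). lra. }
      lra. }
    assert (Hgoal : h*s*sg/(24*dt)*P + h*s*t^2/(16*sg) <= h*s*(sg/dt)/6*(P + t^2)).
    { replace (h*s*sg/(24*dt)*P) with (h*s*(sg/dt)/24*P) by (field; lra).
      replace (h*s*t^2/(16*sg)) with (h*s*(1/(3*sg))*(3/16)*t^2) by (field; lra).
      assert (Hk : 0 <= h*s*(1/(3*sg))) by (apply Rmult_le_pos; [lra|apply Rlt_le, Rdiv_lt_0_compat; lra]).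
      assert (h*s*(1/(3*sg)) <= h*s*(sg/dt)) by (apply Rmult_le_compat_l; lra).
      assert (0 <= t^2) by apply pow2_ge_0.
      set (a := h*s*(1/(3*sg))) in *. set (b := h*s*(sg/dt)) in *.
      assert (a*t^2 <= b*t^2) by (apply Rmult_le_compat_r; lra).
      assert (b*t^2 <= b*(2*P)) by (apply Rmult_le_compat_l; lra).
      assert (0 <= b*P) by (apply Rmult_le_pos; lra).
      lra. }
    unfold t in *. lra.
Qed.

Lemma vnorm_nonneg v : 0 <= vnorm v.
Proof. apply sqrt_pos. Qed.
Lemma vnorm_sq v : vnorm v ^ 2 = vdot v v.
Proof. unfold vnorm. simpl. rewrite Rmult_1_r. apply sqrt_sqrt, vdot_self_nonneg. Qed.
Lemma vdot_cs u v : vdot u v <= vnorm u * vnorm v.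
Proof.
  assert (H1 := vnorm_sq u). assert (H2 := vnorm_sq v).
  assert (Hu := vnorm_nonneg u). assert (Hv := vnorm_nonneg v).
  assert (Hcs : (vdot u v)^2 <= vdot u u * vdot v v).
  { unfold vdot. destruct u as [u1 u2], v as [v1 v2]; simpl.
    pose proof (pow2_ge_0 (u1*v2 - u2*v1)). nra. }
  rewrite <- H1, <- H2 in Hcs.
  destruct (Rle_dec (vdot u v) 0). { apply Rle_trans with 0; auto. apply Rmult_le_pos; auto. }
  assert (0 <= vnorm u * vnorm v) by (apply Rmult_le_pos; auto).
  nra.
Qed.
Lemma vnorm_triang u v : vnorm (vadd u v) <= vnorm u + vnorm v.
Proof.
  assert (Hu := vnorm_nonneg u). assert (Hv := vnorm_nonneg v).
  assert (Hs : vdot (vadd u v) (vadd u v) <= (vnorm u + vnorm v)^2).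
  { replace (vdot (vadd u v) (vadd u v)) with (vdot u u + 2 * vdot u v + vdot v v)
      by (unfold vdot, vadd; simpl; ring).
    rewrite <- (vnorm_sq u), <- (vnorm_sq v). assert (H := vdot_cs u v). nra. }
  unfold vnorm at 1. rewrite <- (sqrt_pow2 (vnorm u + vnorm v)) by lra.
  apply sqrt_le_1_alt. auto.
Qed.
Lemma vnorm_rev u v : Rabs (vnorm u - vnorm v) <= vnorm (vsub u v).
Proof.
  assert (H1 := vnorm_triang (vsub u v) v). assert (H2 := vnorm_triang (vsub v u) u).
  replace (vadd (vsub u v) v) with u in H1 by (destruct u, v; unfold vadd, vsub; simpl; f_equal; ring).
  replace (vadd (vsub v u) u) with v in H2 by (destruct u, v; unfold vadd, vsub; simpl; f_equal; ring).
  replace (vnorm (vsub v u)) with (vnorm (vsub u v)) in H2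
    by (destruct u, v; unfold vnorm, vdot, vsub; simpl; f_equal; ring).
  apply Rabs_le. lra.
Qed.

Lemma elem_mono lumped J Xm dt D E j sg : (1 <= J)%nat -> (1 <= j)%nat -> 0 < dt -> 0 < sg ->
  sg <= xa Xm j -> sg <= xb Xm j -> dt <= 3*sg^2 -> 0 < sj J Xm j ->
  Eloc lumped J Xm dt D j (vdiff D E (pred j)) (vdiff D E j)
  - Eloc lumped J Xm dt E j (vdiff D E (pred j)) (vdiff D E j)
  >= hh J * sj J Xm j * sg / (24*dt) *
     (vdot (vdiff D E (pred j)) (vdiff D E (pred j)) + vdot (vdiff D E j) (vdiff D E j)).
Proof.
  intros HJ Hj Hdt Hsg Hxa Hxb Hdt3 Hs.
  assert (Hh : 0 < hh J) by (apply hh_pos; auto).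
  unfold Eloc, massT, bT, cT.
  set (dW := vscal (1 / hh J) (vsub (vdiff D E j) (vdiff D E (pred j)))).
  set (d1 := deriv J (X1 Xm D) j). set (d2 := deriv J (X1 Xm E) j).
  assert (Hd : vsub d1 d2 = dW).
  { unfold d1, d2, dW, deriv, X1, vdiff, vsub, vscal, vadd. simpl. f_equal; field; lra. }
  assert (Hc : vdot d1 dW = vdot d2 dW + vnorm dW ^ 2).
  { rewrite vnorm_sq, <- Hd. unfold vdot, vsub. simpl. ring. }
  assert (Hn : Rabs (vnorm d1 - vnorm d2) <= vnorm dW) by (rewrite <- Hd; apply vnorm_rev).
  rewrite Hc.
  assert (H := elem_ineq lumped (hh J) (sj J Xm j) dt sg (xa Xm j) (xb Xm j)
     (fst (vdiff D E (pred j))) (snd (vdiff D E (pred j))) (fst (vdiff D E j)) (snd (vdiff D E j))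
     (vnorm dW) (vnorm d1 - vnorm d2) Hh Hs Hdt Hsg Hxa Hxb Hdt3 Hn).
  clearbody dW d1 d2.
  unfold xm. set (s := sj J Xm j) in *. set (h := hh J) in *.
  set (n1 := vnorm d1) in *. set (n2 := vnorm d2) in *. set (nW := vnorm dW) in *.
  set (v2 := vdot d2 dW). clearbody s h n1 n2 nW v2.
  unfold vdiff, vsub, vmid, vscal, vadd, vdot in *. simpl in *.
  destruct lumped.
  - lra.
  - lra.
Qed.

Definition mk (t : bctype) (v : vec) : vec :=
  match t with BcD => (0,0) | Bc2 => (fst v, 0) | _ => (0, snd v) end.
Definition Pr (per : bool) (bc : bool -> bctype) (J : nat) (Y : nat -> vec) (k : nat) : vec :=
  if (J <? k)%nat then (0,0) else
  if per then (if (orb (k =? 0)%nat (k =? J)%nat) then vmid (Y O) (Y J) else Y k)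
  else (if (k =? 0)%nat then mk (bc false) (Y O) else if (k =? J)%nat then mk (bc true) (Y J) else Y k).

Lemma Pr_inVhd per bc J Y : (1 <= J)%nat -> inVhd per bc J (Pr per bc J Y).
Proof.
  intros HJ.
  assert (H1 : (J <? J)%nat = false) by (apply Nat.ltb_ge; lia).
  assert (H2 : (J <? 0)%nat = false) by (apply Nat.ltb_ge; lia).
  assert (H3 : (J =? 0)%nat = false) by (apply Nat.eqb_neq; lia).
  split.
  - intros ->. unfold Pr. rewrite H1, H2, H3, !Nat.eqb_refl. simpl. reflexivity.
  - intros p. unfold inbd.
    repeat split; intros [Hper Hb]; subst per; destruct p; unfold bnode, Pr;
      rewrite ?H1, ?H2, ?H3, ?Nat.eqb_refl; simpl; rewrite Hb; unfold vdot, e1, e2; simpl; first [reflexivity | ring].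
Qed.

Lemma mk_lin t u v : mk t (vsub u v) = vsub (mk t u) (mk t v).
Proof. destruct t, u, v; unfold mk, vsub; simpl; f_equal; ring. Qed.

Lemma Pr_lin per bc J Y Z : Pr per bc J (vdiff Y Z) = vdiff (Pr per bc J Y) (Pr per bc J Z).
Proof.
  apply functional_extensionality; intros k. unfold Pr, vdiff.
  destruct (J <? k)%nat. unfold vsub; simpl; f_equal; ring.
  destruct per.
  - destruct (orb (k =? 0)%nat (k =? J)%nat); auto.
    destruct (Y O), (Y J), (Z O), (Z J); unfold vmid, vscal, vadd, vsub; simpl; f_equal; field.
  - destruct (k =? 0)%nat. apply mk_lin. destruct (k =? J)%nat. apply mk_lin. auto.
Qed.

Lemma mk_dot t v : vdot (mk t v) (mk t v) <= vdot v v.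
Proof. destruct t, v; unfold mk, vdot; simpl; nra. Qed.

Lemma sum0_split J' f : sum0 (S J') f = f O + rsum J' f + f (S J').
Proof. unfold sum0; simpl; ring. Qed.

Lemma Pr_Sn per bc J Y : (1 <= J)%nat -> Sn J (Pr per bc J Y) <= Sn J Y.
Proof.
  intros HJ. unfold Sn. destruct per.
  - destruct J as [|J']; [lia|]. rewrite !sum0_split.
    rewrite (rsum_ext J' (fun k => vdot (Pr true bc (S J') Y k) (Pr true bc (S J') Y k)) (fun k => vdot (Y k) (Y k))).
    2:{ intros k Hk. unfold Pr.
        replace ((S J' <? k)%nat) with false by (symmetry; apply Nat.ltb_ge; lia).
        replace (orb (k =? 0)%nat (k =? S J')%nat) with false.
        auto. symmetry. apply Bool.orb_false_iff. split; apply Nat.eqb_neq; lia. }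
    unfold Pr. replace ((S J' <? 0)%nat) with false by reflexivity.
    replace ((S J' <? S J')%nat) with false by (symmetry; apply Nat.ltb_ge; lia).
    replace ((S J' =? S J')%nat) with true by (symmetry; apply Nat.eqb_refl). simpl.
    destruct (Y O), (Y (S J')); unfold vmid, vscal, vadd, vdot; simpl. pose proof (pow2_ge_0 (r - r1)); pose proof (pow2_ge_0 (r0 - r2)). nra.
  - apply sum0_le. intros k Hk. unfold Pr.
    replace ((J <? k)%nat) with false by (symmetry; apply Nat.ltb_ge; lia).
    destruct (Nat.eqb_spec k 0). subst k. apply mk_dot.
    destruct (Nat.eqb_spec k J). subst k. apply mk_dot. lra.
Qed.

Lemma Pr_ip per bc J Y eta : (1 <= J)%nat -> inVhd per bc J eta ->
  ipS J (Pr per bc J Y) eta = ipS J Y eta.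
Proof.
  intros HJ [Hper Hc]. unfold ipS. destruct per.
  - specialize (Hper eq_refl).
    destruct J as [|J']; [lia|]. rewrite !sum0_split.
    rewrite (rsum_ext J' (fun k => vdot (Pr true bc (S J') Y k) (eta k)) (fun k => vdot (Y k) (eta k))).
    2:{ intros k Hk. unfold Pr.
        replace ((S J' <? k)%nat) with false by (symmetry; apply Nat.ltb_ge; lia).
        replace (orb (k =? 0)%nat (k =? S J')%nat) with false.
        auto. symmetry. apply Bool.orb_false_iff. split; apply Nat.eqb_neq; lia. }
    unfold Pr. replace ((S J' <? 0)%nat) with false by reflexivity.
    replace ((S J' <? S J')%nat) with false by (symmetry; apply Nat.ltb_ge; lia).
    replace ((S J' =? S J')%nat) with true by (symmetry; apply Nat.eqb_refl). simpl.
    rewrite <- Hper.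
    destruct (Y O), (Y (S J')), (eta O); unfold vmid, vscal, vadd, vdot; simpl. field.
  - apply sum0_ext. intros k Hk. unfold Pr.
    replace ((J <? k)%nat) with false by (symmetry; apply Nat.ltb_ge; lia).
    assert (Hm : forall p, vdot (mk (bc p) (Y (bnode J p))) (eta (bnode J p)) = vdot (Y (bnode J p)) (eta (bnode J p))).
    { intros p. destruct (Hc p) as [C0 [C1 [C2 CD]]]. unfold inbd in *.
      destruct (bc p) eqn:Hb.
      - rewrite (CD (conj eq_refl eq_refl)). unfold mk, vdot; simpl; ring.
      - assert (H := C0 (conj eq_refl eq_refl)). destruct (Y (bnode J p)), (eta (bnode J p)); unfold mk, vdot, e1 in *; simpl in *. nra.
      - assert (H := C1 (conj eq_refl eq_refl)). destruct (Y (bnode J p)), (eta (bnode J p)); unfold mk, vdot, e1 in *; simpl in *. nra.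
      - assert (H := C2 (conj eq_refl eq_refl)). destruct (Y (bnode J p)), (eta (bnode J p)); unfold mk, vdot, e2 in *; simpl in *. nra. }
    destruct (Nat.eqb_spec k 0). subst k. apply (Hm false).
    destruct (Nat.eqb_spec k J). subst k. apply (Hm true). auto.
Qed.

Definition cb (v : vec) A := Rabs (fst v) <= A /\ Rabs (snd v) <= A.

Lemma abs_prod_le x y X Y : Rabs x <= X -> Rabs y <= Y -> Rabs (x*y) <= X*Y.
Proof. intros H1 H2. rewrite Rabs_mult. apply Rmult_le_compat; auto using Rabs_pos. Qed.

Lemma vdot_bnd u v A B : cb u A -> cb v B -> Rabs (vdot u v) <= 2*A*B.
Proof.
  intros [H1 H2] [H3 H4]. unfold vdot.
  eapply Rle_trans; [apply Rabs_triang|].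
  assert (Rabs (fst u * fst v) <= A*B) by (apply abs_prod_le; auto).
  assert (Rabs (snd u * snd v) <= A*B) by (apply abs_prod_le; auto). lra.
Qed.
Lemma cb_mid u v A : cb u A -> cb v A -> cb (vmid u v) A.
Proof.
  intros [H1 H2] [H3 H4]. unfold vmid, vscal, vadd, cb; simpl.
  split; [replace (1/2*(fst u + fst v)) with ((fst u + fst v)/2) by field
         |replace (1/2*(snd u + snd v)) with ((snd u + snd v)/2) by field];
  unfold Rdiv; rewrite Rabs_mult, (Rabs_pos_eq (/2)) by lra;
  assert (Ht := Rabs_triang (fst u) (fst v)); assert (Ht' := Rabs_triang (snd u) (snd v)); lra.
Qed.
Lemma cb_dif u v A c : 0 <= c -> cb u A -> cb v A -> cb (vscal c (vsub u v)) (c*(2*A)).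
Proof.
  intros Hc [H1 H2] [H3 H4]. unfold vscal, vsub, cb; simpl.
  split; rewrite Rabs_mult, (Rabs_pos_eq c) by lra; apply Rmult_le_compat_l; auto;
    unfold Rminus; eapply Rle_trans; try apply Rabs_triang; rewrite Rabs_Ropp; lra.
Qed.
Lemma vnorm_cb u A : cb u A -> vnorm u <= 2*A.
Proof.
  intros [H1 H2]. assert (Hn : vnorm u <= Rabs (fst u) + Rabs (snd u)).
  { unfold vnorm. rewrite <- (sqrt_pow2 (Rabs (fst u) + Rabs (snd u))) by (pose proof (Rabs_pos (fst u)); pose proof (Rabs_pos (snd u)); lra).
    apply sqrt_le_1_alt. unfold vdot.
    assert (E1 : fst u * fst u = Rabs (fst u) * Rabs (fst u)) by (rewrite <- Rabs_mult; rewrite Rabs_pos_eq; [auto|nra]).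
    assert (E2 : snd u * snd u = Rabs (snd u) * Rabs (snd u)) by (rewrite <- Rabs_mult; rewrite Rabs_pos_eq; [auto|nra]).
    rewrite E1, E2. pose proof (Rabs_pos (fst u)); pose proof (Rabs_pos (snd u)). nra. }
  lra.
Qed.

Lemma massT_bound lumped J Xm dt W j a b mu nu : 0 < hh J -> 0 < dt -> 0 <= sj J Xm j ->
  0 <= mu -> 0 <= nu -> cb (W (pred j)) mu -> cb (W j) mu -> cb a nu -> cb b nu ->
  Rabs (massT lumped J Xm dt W j a b)
  <= 4*hh J*(sj J Xm j/dt)*(Rabs (xa Xm j) + Rabs (xb Xm j) + Rabs (xm Xm j))*mu*nu.
Proof.
  intros Hh Hdt Hs Hmu Hnu Hwp Hwk Ha Hb.
  assert (Hc : 0 <= hh J * (sj J Xm j / dt)) by (apply Rmult_le_pos; [lra|apply Rmult_le_pos; [auto|apply Rlt_le, Rinv_0_lt_compat; auto]]).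
  assert (D1 := vdot_bnd _ _ _ _ Hwp Ha). assert (D2 := vdot_bnd _ _ _ _ Hwk Hb).
  assert (D3 := vdot_bnd _ _ _ _ (cb_mid _ _ _ Hwp Hwk) (cb_mid _ _ _ Ha Hb)).
  assert (P1 := abs_prod_le _ _ _ _ (Rle_refl (Rabs (xa Xm j))) D1).
  assert (P2 := abs_prod_le _ _ _ _ (Rle_refl (Rabs (xb Xm j))) D2).
  assert (H4 : Rabs (4 * xm Xm j) <= 4 * Rabs (xm Xm j)) by (rewrite Rabs_mult, (Rabs_pos_eq 4) by lra; lra).
  assert (P3 := abs_prod_le _ _ _ _ H4 D3).
  assert (0 <= Rabs (xa Xm j) * (mu*nu)) by (apply Rmult_le_pos; [apply Rabs_pos|nra]).
  assert (0 <= Rabs (xb Xm j) * (mu*nu)) by (apply Rmult_le_pos; [apply Rabs_pos|nra]).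
  assert (0 <= Rabs (xm Xm j) * (mu*nu)) by (apply Rmult_le_pos; [apply Rabs_pos|nra]).
  unfold massT. destruct lumped.
  - replace (hh J / 2 * (sj J Xm j / dt)) with ((hh J * (sj J Xm j / dt)) / 2) by (field; lra).
    unfold Rdiv at 1. rewrite Rabs_mult, Rabs_mult, (Rabs_pos_eq (hh J * (sj J Xm j / dt))) by auto.
    rewrite (Rabs_pos_eq (/2)) by lra.
    assert (T := Rabs_triang (xb Xm j * vdot (W j) b) (xa Xm j * vdot (W (pred j)) a)).
    set (c := hh J * (sj J Xm j / dt)) in *.
    assert (c * / 2 * Rabs (xb Xm j * vdot (W j) b + xa Xm j * vdot (W (pred j)) a)
            <= c * / 2 * (Rabs (xb Xm j) * (2*mu*nu) + Rabs (xa Xm j) * (2*mu*nu))).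
    { apply Rmult_le_compat_l; [lra|]. lra. }
    assert (c * (Rabs (xa Xm j) * (mu*nu)) >= 0) by (apply Rle_ge, Rmult_le_pos; lra).
    assert (c * (Rabs (xb Xm j) * (mu*nu)) >= 0) by (apply Rle_ge, Rmult_le_pos; lra).
    assert (c * (Rabs (xm Xm j) * (mu*nu)) >= 0) by (apply Rle_ge, Rmult_le_pos; lra).
    replace (4 * hh J * (sj J Xm j / dt) * (Rabs (xa Xm j) + Rabs (xb Xm j) + Rabs (xm Xm j)) * mu * nu)
      with (4 * c * (Rabs (xa Xm j) + Rabs (xb Xm j) + Rabs (xm Xm j)) * mu * nu) by (unfold c; ring).
    lra.
  - replace (hh J / 6 * (sj J Xm j / dt)) with ((hh J * (sj J Xm j / dt)) / 6) by (field; lra).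
    unfold Rdiv at 1. rewrite Rabs_mult, Rabs_mult, (Rabs_pos_eq (hh J * (sj J Xm j / dt))) by auto.
    rewrite (Rabs_pos_eq (/6)) by lra.
    set (c := hh J * (sj J Xm j / dt)) in *.
    set (t1 := xa Xm j * vdot (W (pred j)) a). set (t2 := 4 * xm Xm j * vdot (vmid (W (pred j)) (W j)) (vmid a b)).
    set (t3 := xb Xm j * vdot (W j) b).
    assert (T : Rabs (t1 + t2 + t3) <= Rabs t1 + Rabs t2 + Rabs t3).
    { eapply Rle_trans; [apply Rabs_triang|]. assert (Ht := Rabs_triang t1 t2). lra. }
    assert (Ht2 : Rabs t2 <= 4 * Rabs (xm Xm j) * (2*mu*nu)).
    { unfold t2. exact P3. }
    assert (c * / 6 * Rabs (t1 + t2 + t3) <= c * / 6 * (Rabs (xa Xm j) * (2*mu*nu) + 4 * Rabs (xm Xm j) * (2*mu*nu) + Rabs (xb Xm j) * (2*mu*nu))).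
    { apply Rmult_le_compat_l; [lra|]. unfold t1, t2, t3 in *. lra. }
    assert (c * (Rabs (xa Xm j) * (mu*nu)) >= 0) by (apply Rle_ge, Rmult_le_pos; lra).
    assert (c * (Rabs (xb Xm j) * (mu*nu)) >= 0) by (apply Rle_ge, Rmult_le_pos; lra).
    assert (c * (Rabs (xm Xm j) * (mu*nu)) >= 0) by (apply Rle_ge, Rmult_le_pos; lra).
    replace (4 * hh J * (sj J Xm j / dt) * (Rabs (xa Xm j) + Rabs (xb Xm j) + Rabs (xm Xm j)) * mu * nu)
      with (4 * c * (Rabs (xa Xm j) + Rabs (xb Xm j) + Rabs (xm Xm j)) * mu * nu) by (unfold c; ring).
    lra.
Qed.

Definition Kel J Xm dt j := 4*hh J*(sj J Xm j/dt)*(Rabs (xa Xm j)+Rabs (xb Xm j)+Rabs (xm Xm j))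
  + 4 + 8*Rabs (xm Xm j)/(hh J*sj J Xm j).

Lemma elem_lip lumped J Xm dt D E Z j mu nu : (1 <= J)%nat -> 0 < dt -> 0 < sj J Xm j ->
  0 <= mu -> 0 <= nu -> cb (vdiff D E (pred j)) mu -> cb (vdiff D E j) mu -> cb (Z (pred j)) nu -> cb (Z j) nu ->
  Rabs (Eloc lumped J Xm dt D j (Z (pred j)) (Z j) - Eloc lumped J Xm dt E j (Z (pred j)) (Z j))
  <= Kel J Xm dt j * mu * nu.
Proof.
  intros HJ Hdt Hs Hmu Hnu Hwp Hwk Ha Hb.
  assert (Hh : 0 < hh J) by (apply hh_pos; auto).
  set (W := vdiff D E) in *. set (a := Z (pred j)) in *. set (b := Z j) in *.
  set (dW := vscal (1 / hh J) (vsub (W j) (W (pred j)))).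
  set (dZ := vscal (1 / hh J) (vsub b a)).
  set (d1 := deriv J (X1 Xm D) j). set (d2 := deriv J (X1 Xm E) j).
  assert (Hd : vsub d1 d2 = dW).
  { unfold d1, d2, dW, deriv, X1, W, vdiff, vsub, vscal, vadd. simpl. f_equal; field; lra. }
  assert (Hc : vdot d1 dZ = vdot d2 dZ + vdot dW dZ).
  { rewrite <- Hd. unfold vdot, vsub. simpl. ring. }
  assert (Hsplit : Eloc lumped J Xm dt D j a b - Eloc lumped J Xm dt E j a b
     = massT lumped J Xm dt W j a b + hh J/2*(fst a + fst b)*(vnorm d1 - vnorm d2)
       + hh J * xm Xm j * vdot dW dZ / sj J Xm j).
  { unfold Eloc, bT, cT. fold d1 d2 dZ. rewrite Hc.
    unfold massT. clearbody dW dZ d1 d2.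
    set (s := sj J Xm j) in *. set (h := hh J) in *.
    set (n1 := vnorm d1) in *. set (n2 := vnorm d2) in *. set (v2 := vdot d2 dZ). set (v3 := vdot dW dZ).
    unfold xm. clearbody s h n1 n2 v2 v3.
    unfold W, vdiff, vsub, vmid, vscal, vadd, vdot. simpl.
    destruct lumped; field; lra. }
  rewrite Hsplit.
  assert (HM := massT_bound lumped J Xm dt W j a b mu nu Hh Hdt (Rlt_le _ _ Hs) Hmu Hnu Hwp Hwk Ha Hb).
  assert (HdW : cb dW (1/hh J * (2*mu))).
  { apply cb_dif; auto. apply Rlt_le, Rdiv_lt_0_compat; lra. }
  assert (HdZ : cb dZ (1/hh J * (2*nu))).
  { apply cb_dif; auto. apply Rlt_le, Rdiv_lt_0_compat; lra. }
  assert (HnW := vnorm_cb _ _ HdW).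
  assert (Hn : Rabs (vnorm d1 - vnorm d2) <= vnorm dW) by (rewrite <- Hd; apply vnorm_rev).
  assert (Hab : Rabs (fst a + fst b) <= 2*nu).
  { destruct Ha as [Ha1 _], Hb as [Hb1 _]. eapply Rle_trans; [apply Rabs_triang|]. lra. }
  assert (HB : Rabs (hh J/2*(fst a + fst b)*(vnorm d1 - vnorm d2)) <= 4*mu*nu).
  { rewrite Rmult_assoc. rewrite Rabs_mult, (Rabs_pos_eq (hh J/2)) by lra.
    assert (Rabs ((fst a + fst b) * (vnorm d1 - vnorm d2)) <= (2*nu) * (2 * (1 / hh J * (2 * mu))))
      by (apply abs_prod_le; lra).
    apply Rle_trans with (hh J/2 * ((2*nu) * (2 * (1 / hh J * (2 * mu))))).
    apply Rmult_le_compat_l; lra. right. field. lra. }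
  assert (HV := vdot_bnd _ _ _ _ HdW HdZ).
  assert (HC : Rabs (hh J * xm Xm j * vdot dW dZ / sj J Xm j) <= 8*Rabs (xm Xm j)/(hh J*sj J Xm j)*mu*nu).
  { replace (hh J * xm Xm j * vdot dW dZ / sj J Xm j) with ((hh J / sj J Xm j) * (xm Xm j * vdot dW dZ)) by (field; lra).
    rewrite Rabs_mult, (Rabs_pos_eq (hh J / sj J Xm j)) by (apply Rlt_le, Rdiv_lt_0_compat; lra).
    assert (Rabs (xm Xm j * vdot dW dZ) <= Rabs (xm Xm j) * (2 * (1 / hh J * (2 * mu)) * (1 / hh J * (2 * nu))))
      by (apply abs_prod_le; lra).
    apply Rle_trans with (hh J / sj J Xm j * (Rabs (xm Xm j) * (2 * (1 / hh J * (2 * mu)) * (1 / hh J * (2 * nu))))).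
    apply Rmult_le_compat_l; [apply Rlt_le, Rdiv_lt_0_compat; lra|lra]. right. field. lra. }
  unfold Kel.
  eapply Rle_trans. apply Rabs_triang.
  assert (T := Rabs_triang (massT lumped J Xm dt W j a b) (hh J/2*(fst a + fst b)*(vnorm d1 - vnorm d2))).
  assert (Eq : (4 * hh J * (sj J Xm j / dt) * (Rabs (xa Xm j) + Rabs (xb Xm j) + Rabs (xm Xm j)) + 4 +
     8 * Rabs (xm Xm j) / (hh J * sj J Xm j)) * mu * nu
     = 4 * hh J * (sj J Xm j / dt) * (Rabs (xa Xm j) + Rabs (xb Xm j) + Rabs (xm Xm j)) * mu * nu + 4*mu*nu
       + 8*Rabs (xm Xm j)/(hh J*sj J Xm j)*mu*nu) by ring.
  rewrite Eq. lra.
Qed.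

Lemma Bloc_diff per bc varrho J Xm D E a0 aJ :
  Bloc per bc varrho J Xm D a0 aJ - Bloc per bc varrho J Xm E a0 aJ
  = bsum per bc Bc2 (fun p => rpos (varrho p) * fst (vdiff D E (bnode J p)) * fst (if p then aJ else a0)).
Proof.
  unfold Bloc, bsum, X1. destruct per, (bc false), (bc true);
  unfold vdot, vadd, vscal, e1, e2, vdiff, vsub; simpl; ring.
Qed.

Lemma rpos_nonneg r : 0 <= rpos r.
Proof. unfold rpos. apply Rmax_r. Qed.

Lemma sum_pair n f : (1 <= n)%nat -> (forall k, 0 <= f k) -> sum0 n f <= rsum n (fun j => f (pred j) + f j).
Proof.
  intros Hn Hf. induction n. lia.
  destruct n. unfold sum0; simpl; lra.
  rewrite sum0_S. change (rsum (S (S n)) (fun j => f (pred j) + f j)) with (rsum (S n) (fun j => f (pred j) + f j) + (f (S n) + f (S (S n)))).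
  specialize (Hf (S n)) as Hf1.
  assert (sum0 (S n) f <= rsum (S n) (fun j => f (pred j) + f j)) by (apply IHn; lia).
  lra.
Qed.

Lemma Phi_mono lumped per bc varrho J Xm dt D E sg kap : (1 <= J)%nat -> 0 < dt -> 0 < sg -> dt <= 3*sg^2 -> 0 <= kap ->
  (forall j, (1 <= j <= J)%nat -> sg <= xa Xm j /\ sg <= xb Xm j /\ 0 < sj J Xm j /\ kap <= hh J * sj J Xm j * sg / (24*dt)) ->
  Phi lumped per bc varrho J Xm dt D (vdiff D E) - Phi lumped per bc varrho J Xm dt E (vdiff D E)
  >= kap * Sn J (vdiff D E).
Proof.
  intros HJ Hdt Hsg Hdt3 Hk Hj. unfold Phi.
  set (W := vdiff D E).
  assert (HB : Bloc per bc varrho J Xm D (W O) (W J) - Bloc per bc varrho J Xm E (W O) (W J) >= 0).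
  { rewrite Bloc_diff. unfold bsum. fold W.
    assert (H0 := rpos_nonneg (varrho false)). assert (H1 := rpos_nonneg (varrho true)).
    assert (P0 : 0 <= rpos (varrho false) * fst (W (bnode J false)) * fst (W O))
      by (rewrite Rmult_assoc; apply Rmult_le_pos; auto; simpl; apply Rle_0_sqr).
    assert (P1 : 0 <= rpos (varrho true) * fst (W (bnode J true)) * fst (W J))
      by (rewrite Rmult_assoc; apply Rmult_le_pos; auto; simpl; apply Rle_0_sqr).
    destruct per, (bc false), (bc true); simpl in *; lra. }
  assert (HE : rsum J (fun j => Eloc lumped J Xm dt D j (W (pred j)) (W j)) - rsum J (fun j => Eloc lumped J Xm dt E j (W (pred j)) (W j))
      >= kap * Sn J W).
  { rewrite <- rsum_minus. unfold Sn.
    apply Rle_ge. apply Rle_trans with (kap * rsum J (fun j => vdot (W (pred j)) (W (pred j)) + vdot (W j) (W j))).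
    - apply Rmult_le_compat_l; auto. apply (sum_pair J (fun k => vdot (W k) (W k))); auto. intros; apply vdot_self_nonneg.
    - rewrite <- rsum_scal. apply rsum_le. intros j Hjj.
      destruct (Hj j Hjj) as [Ha [Hb [Hs Hkap]]].
      assert (H := elem_mono lumped J Xm dt D E j sg HJ ltac:(lia) Hdt Hsg Ha Hb Hdt3 Hs). fold W in H.
      assert (0 <= vdot (W (pred j)) (W (pred j)) + vdot (W j) (W j)) by (pose proof (vdot_self_nonneg (W (pred j))); pose proof (vdot_self_nonneg (W j)); lra).
      assert (kap * (vdot (W (pred j)) (W (pred j)) + vdot (W j) (W j)) <= hh J * sj J Xm j * sg / (24 * dt) * (vdot (W (pred j)) (W (pred j)) + vdot (W j) (W j)))
        by (apply Rmult_le_compat_r; auto).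
      lra. }
  lra.
Qed.

Lemma rsum_abs n f : Rabs (rsum n f) <= rsum n (fun j => Rabs (f j)).
Proof. induction n; simpl. rewrite Rabs_R0; lra. eapply Rle_trans. apply Rabs_triang. lra. Qed.

Lemma Phi_lip lumped per bc varrho J Xm dt D E Z : (1 <= J)%nat -> 0 < dt ->
  (forall j, (1 <= j <= J)%nat -> 0 < sj J Xm j) ->
  Rabs (Phi lumped per bc varrho J Xm dt D Z - Phi lumped per bc varrho J Xm dt E Z)
  <= (rsum J (Kel J Xm dt) + (rpos (varrho false) + rpos (varrho true))) * sqrt (Sn J (vdiff D E)) * sqrt (Sn J Z).
Proof.
  intros HJ Hdt Hs. unfold Phi.
  set (mu := sqrt (Sn J (vdiff D E))). set (nu := sqrt (Sn J Z)).
  assert (Hmu : 0 <= mu) by apply sqrt_pos. assert (Hnu : 0 <= nu) by apply sqrt_pos.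
  assert (CW : forall k, (k <= J)%nat -> cb (vdiff D E k) mu) by (intros; apply comp_bound; auto).
  assert (CZ : forall k, (k <= J)%nat -> cb (Z k) nu) by (intros; apply comp_bound; auto).
  replace (rsum J (fun j => Eloc lumped J Xm dt D j (Z (pred j)) (Z j)) + Bloc per bc varrho J Xm D (Z O) (Z J)
     - (rsum J (fun j => Eloc lumped J Xm dt E j (Z (pred j)) (Z j)) + Bloc per bc varrho J Xm E (Z O) (Z J)))
    with (rsum J (fun j => Eloc lumped J Xm dt D j (Z (pred j)) (Z j) - Eloc lumped J Xm dt E j (Z (pred j)) (Z j))
          + (Bloc per bc varrho J Xm D (Z O) (Z J) - Bloc per bc varrho J Xm E (Z O) (Z J)))
    by (rewrite rsum_minus; ring).
  eapply Rle_trans. apply Rabs_triang.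
  assert (HE : Rabs (rsum J (fun j => Eloc lumped J Xm dt D j (Z (pred j)) (Z j) - Eloc lumped J Xm dt E j (Z (pred j)) (Z j)))
     <= rsum J (Kel J Xm dt) * mu * nu).
  { eapply Rle_trans. apply rsum_abs.
    replace (rsum J (Kel J Xm dt) * mu * nu) with (rsum J (fun j => Kel J Xm dt j * mu * nu)).
    2:{ rewrite (rsum_ext J _ (fun j => (mu*nu) * Kel J Xm dt j)) by (intros; ring). rewrite rsum_scal. ring. }
    apply rsum_le. intros j Hj.
    apply elem_lip; auto; try apply Hs; auto; (apply CW || apply CZ); lia. }
  assert (HB : Rabs (Bloc per bc varrho J Xm D (Z O) (Z J) - Bloc per bc varrho J Xm E (Z O) (Z J))
     <= (rpos (varrho false) + rpos (varrho true)) * mu * nu).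
  { rewrite Bloc_diff. unfold bsum.
    assert (H0 := rpos_nonneg (varrho false)). assert (H1 := rpos_nonneg (varrho true)).
    assert (P0 : Rabs (rpos (varrho false) * fst (vdiff D E (bnode J false)) * fst (Z O)) <= rpos (varrho false) * mu * nu).
    { apply abs_prod_le. rewrite Rabs_mult, (Rabs_pos_eq (rpos _)) by auto. apply Rmult_le_compat_l; auto.
      apply CW; simpl; lia. apply CZ; lia. }
    assert (P1 : Rabs (rpos (varrho true) * fst (vdiff D E (bnode J true)) * fst (Z J)) <= rpos (varrho true) * mu * nu).
    { apply abs_prod_le. rewrite Rabs_mult, (Rabs_pos_eq (rpos _)) by auto. apply Rmult_le_compat_l; auto.
      apply CW; simpl; lia. apply CZ; lia. }
    assert (0 <= rpos (varrho false) * mu * nu) by (apply Rmult_le_pos; [apply Rmult_le_pos|]; auto).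
    assert (0 <= rpos (varrho true) * mu * nu) by (apply Rmult_le_pos; [apply Rmult_le_pos|]; auto).
    assert (T := Rabs_triang (rpos (varrho false) * fst (vdiff D E (bnode J false)) * fst (Z O))
                             (rpos (varrho true) * fst (vdiff D E (bnode J true)) * fst (Z J))).
    assert (A0 : Rabs 0 = 0) by (apply Rabs_pos_eq; lra).
    destruct per, (bc false), (bc true); simpl in *; rewrite ?A0, ?Rplus_0_l, ?Rplus_0_r; lra. }
  lra.
Qed.

Lemma exists_min_pos n (g : nat -> R) : (forall j, (1 <= j <= n)%nat -> 0 < g j) ->
  exists c, 0 < c /\ forall j, (1 <= j <= n)%nat -> c <= g j.
Proof.
  induction n; intros H.
  - exists 1. split. lra. intros; lia.
  - destruct IHn as [c [Hc Hcj]]. intros; apply H; lia.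
    exists (Rmin c (g (S n))). split.
    + apply Rmin_glb_lt; auto. apply H; lia.
    + intros j Hj. destruct (Nat.eq_dec j (S n)) as [->|Hne].
      * apply Rmin_r.
      * eapply Rle_trans. apply Rmin_l. apply Hcj. lia.
Qed.

Lemma ipS_diff J F G Z : ipS J (vdiff F G) Z = ipS J F Z - ipS J G Z.
Proof. unfold ipS. rewrite <- sum0_minus. apply sum0_ext. intros. unfold vdiff, vsub, vdot; simpl; ring. Qed.

Lemma Sn_ip J F : Sn J F = ipS J F F.
Proof. reflexivity. Qed.

Lemma Sn_expand J W Z w : Sn J (fun k => vsub (W k) (vscal w (Z k)))
  = Sn J W - 2*w*ipS J Z W + w^2 * Sn J Z.
Proof.
  unfold Sn, ipS. rewrite <- !sum0_scal, <- sum0_minus, <- sum0_plus. apply sum0_ext. intros.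
  unfold vsub, vscal, vdot; simpl; ring.
Qed.

Lemma ipS_lin J W Z w eta : ipS J (fun k => vsub (W k) (vscal w (Z k))) eta = ipS J W eta - w * ipS J Z eta.
Proof.
  unfold ipS. rewrite <- sum0_scal, <- sum0_minus. apply sum0_ext. intros.
  unfold vsub, vscal, vdot; simpl; ring.
Qed.

Lemma Bloc_eq per bc varrho J Xm D eta :
  Bloc per bc varrho J Xm D (eta O) (eta J) =
  bsum per bc Bc1 (fun p => varrho p * vdot (Xm (bnode J p)) e1 * vdot (eta (bnode J p)) e2)
  + bsum per bc Bc2 (fun p =>
             vdot (vadd (vscal (rpos (varrho p)) ((fun i => vadd (Xm i) (D i)) (bnode J p)))
                        (vscal (rneg (varrho p)) (Xm (bnode J p)))) e1
             * vdot (eta (bnode J p)) e1).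
Proof. unfold Bloc, bsum, X1. destruct per; [reflexivity|]. destruct (bc false), (bc true); reflexivity. Qed.

Theorem theorem4p5
  (lumped : bool) (per : bool) (bc : bool -> bctype) (varrho : bool -> R)
  (J : nat) (Xm : nat -> vec) (dt : R) :
  (forall p : bool, Rabs (varrho p) <= 1) ->
  (3 <= J)%nat ->
  (forall p : bool, ~ inbd per bc Bc0 p) ->
  inVh per J Xm ->
  assumptionA per bc J Xm ->
  0 < dt ->
  (exists mn, is_min_sq J Xm mn /\ dt < 3 * mn) ->
  exists dX kappa : nat -> vec,
    inVhd per bc J dX /\ inVh per J kappa /\
    let X1 := fun i => vadd (Xm i) (dX i) in
    (forall chi : nat -> vec, inVh per J chi ->
       ip_sharp lumped J (fun j rho =>
         fst (interp J Xm j rho) *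
         vdot (vscal (1 / dt) (vsub (interp J X1 j rho) (interp J Xm j rho)))
              (interp J chi j rho) * vnorm (deriv J Xm j))
       = ip_sharp lumped J (fun j rho =>
         fst (interp J Xm j rho) *
         vdot (interp J kappa j rho) (interp J chi j rho) * vnorm (deriv J Xm j))) /\
    (forall eta : nat -> vec, inVhd per bc J eta ->
       ip_sharp lumped J (fun j rho =>
         fst (interp J Xm j rho) *
         vdot (interp J kappa j rho) (interp J eta j rho) * vnorm (deriv J Xm j))
       + ip_exact J (fun j rho =>
         vdot (interp J eta j rho) e1 * vnorm (deriv J X1 j))
       + ip_exact J (fun j rho =>
         fst (interp J Xm j rho) *
         vdot (deriv J X1 j) (deriv J eta j) / vnorm (deriv J Xm j))
       = - bsum per bc Bc1 (fun p =>
             varrho p * vdot (Xm (bnode J p)) e1 * vdot (eta (bnode J p)) e2)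
         - bsum per bc Bc2 (fun p =>
             vdot (vadd (vscal (rpos (varrho p)) (X1 (bnode J p)))
                        (vscal (rneg (varrho p)) (Xm (bnode J p)))) e1
             * vdot (eta (bnode J p)) e1)).
Proof.
  intros Hrho HJ3 Hno0 HXm HA Hdt [mn [Hmin Hdtm]].
  assert (HJ : (1 <= J)%nat) by lia.
  destruct HA as [HA1 HA2].
  assert (Hnd0 : forall rho, ~ in_d0 per bc rho) by (intros rho [p [Hp _]]; exact (Hno0 p Hp)).
  destruct Hmin as [[j0 [rho0 [Hj0 [Hr0 Hm0]]]] Hmin].
  assert (Hmpos : 0 < mn).
  { rewrite Hm0. assert (H := HA2 j0 rho0 Hj0 Hr0 (Hnd0 rho0)). apply pow_lt; lra. }
  set (sg := sqrt mn).
  assert (Hsg : 0 < sg) by (apply sqrt_lt_R0; auto).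
  assert (Hsg2 : sg^2 = mn) by (unfold sg; simpl; rewrite Rmult_1_r; apply sqrt_sqrt; lra).
  assert (Hdt3 : dt <= 3*sg^2) by lra.
  assert (Hx : forall j rho, (1 <= j <= J)%nat -> q J (pred j) <= rho <= q J j -> sg <= vdot (interp J Xm j rho) e1).
  { intros j rho Hj Hr. assert (H1 := HA2 j rho Hj Hr (Hnd0 rho)). assert (H2 := Hmin j rho Hj Hr).
    rewrite <- Hsg2 in H2. set (x := vdot (interp J Xm j rho) e1) in *. nra. }
  assert (Hxa : forall j, (1 <= j <= J)%nat -> sg <= xa Xm j).
  { intros j Hj. assert (H := Hx j (q J (pred j)) Hj (conj (Rle_refl _) (q_le J j HJ ltac:(lia)))).
    rewrite interp_left in H by auto. unfold xa. unfold vdot, e1 in H; simpl in H. lra. }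
  assert (Hxb : forall j, (1 <= j <= J)%nat -> sg <= xb Xm j).
  { intros j Hj. assert (H := Hx j (q J j) Hj (conj (q_le J j HJ ltac:(lia)) (Rle_refl _))).
    rewrite interp_right in H by lia. unfold xb. unfold vdot, e1 in H; simpl in H. lra. }
  assert (Hs : forall j, (1 <= j <= J)%nat -> 0 < sj J Xm j) by (intros; apply HA1; auto).
  assert (Hh : 0 < hh J) by (apply hh_pos; auto).
  destruct (exists_min_pos J (fun j => hh J * sj J Xm j * sg / (24*dt))) as [kap [Hkap Hkapj]].
  { intros j Hj. apply Rdiv_lt_0_compat; [|lra]. apply Rmult_lt_0_compat; auto. apply Rmult_lt_0_compat; auto. }
  set (C0 := rsum J (Kel J Xm dt) + (rpos (varrho false) + rpos (varrho true))).
  set (C := Rmax 1 C0).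
  assert (HC1 : 1 <= C) by apply Rmax_l. assert (HC0 : C0 <= C) by apply Rmax_r.
  set (w := kap / C^2).
  assert (HC2 : 0 < C^2) by (apply pow_lt; lra).
  assert (Hw : 0 < w) by (apply Rdiv_lt_0_compat; auto).
  set (Gd := Gv lumped per bc varrho J Xm dt).
  set (T := fun D => Pr per bc J (fun k => vsub (D k) (vscal w (Gd D k)))).
  set (c := Rmax 0 (1 - kap^2/C^2)).
  assert (Hc : 0 <= c < 1).
  { split. apply Rmax_l. unfold c. apply Rmax_lub_lt. lra.
    assert (0 < kap^2/C^2) by (apply Rdiv_lt_0_compat; auto; apply pow_lt; lra). lra. }
  assert (HGPhi : forall D eta, ipS J (Gd D) eta = Phi lumped per bc varrho J Xm dt D eta)
    by (intros; symmetry; apply Phi_G; auto).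
  assert (Hcontr : forall D E, Sn J (vdiff (T D) (T E)) <= c * Sn J (vdiff D E)).
  { intros D E. unfold T. rewrite <- Pr_lin. eapply Rle_trans. apply Pr_Sn; auto.
    set (W := vdiff D E). set (Z := vdiff (Gd D) (Gd E)).
    replace (vdiff (fun k => vsub (D k) (vscal w (Gd D k))) (fun k => vsub (E k) (vscal w (Gd E k))))
      with (fun k => vsub (W k) (vscal w (Z k))).
    2:{ apply functional_extensionality; intros k. unfold W, Z, vdiff, vsub, vscal.
        apply injective_projections; simpl; ring. }
    rewrite Sn_expand.
    assert (HZW : ipS J Z W >= kap * Sn J W).
    { unfold Z. rewrite ipS_diff, !HGPhi. apply Phi_mono with sg; auto; try lra;
      try (intros j Hj; repeat split; auto; apply Hkapj; auto). }
    assert (HZZ : Sn J Z <= C^2 * Sn J W).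
    { assert (Hl := Phi_lip lumped per bc varrho J Xm dt D E Z HJ Hdt Hs).
      rewrite <- !HGPhi, <- ipS_diff in Hl. fold Z in Hl. fold C0 in Hl. rewrite <- Sn_ip in Hl.
      fold W in Hl.
      assert (HZ0 := Sn_nonneg J Z). assert (HW0 := Sn_nonneg J W).
      rewrite Rabs_pos_eq in Hl by auto.
      set (x := sqrt (Sn J Z)) in *. set (y := sqrt (Sn J W)) in *.
      assert (Hx2 : Sn J Z = x^2) by (unfold x; simpl; rewrite Rmult_1_r, sqrt_sqrt; auto).
      assert (Hy2 : Sn J W = y^2) by (unfold y; simpl; rewrite Rmult_1_r, sqrt_sqrt; auto).
      assert (Hx0 : 0 <= x) by apply sqrt_pos. assert (Hy0 : 0 <= y) by apply sqrt_pos.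
      rewrite Hx2, Hy2 in *.
      assert (x^2 <= C * y * x) by (assert (0 <= y * x) by nra; nra).
      assert (Hxy : x <= C * y).
      { destruct (Req_dec x 0) as [->|Hxn]. nra.
        assert (0 < x) by lra. apply Rmult_le_reg_r with x; auto. nra. }
      assert (0 <= C*y) by nra. nra. }
    assert (Hw2 : w^2 * C^2 = kap^2/C^2) by (unfold w; field; lra).
    assert (Hwk : 2*w*kap = 2*(kap^2/C^2)) by (unfold w; field; lra).
    assert (HW0 := Sn_nonneg J W).
    assert (H1 : - (2*w*ipS J Z W) <= - (2*w*(kap * Sn J W))) by (apply Ropp_le_contravar, Rmult_le_compat_l; lra).
    assert (H2 : w^2 * Sn J Z <= w^2 * (C^2 * Sn J W)) by (apply Rmult_le_compat_l; auto; apply pow2_ge_0).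
    assert (H3 : (1 - kap^2/C^2) * Sn J W <= c * Sn J W) by (apply Rmult_le_compat_r; auto; apply Rmax_r).
    replace (w^2 * (C^2 * Sn J W)) with (kap^2/C^2 * Sn J W) in H2 by (rewrite <- Hw2; ring).
    replace (- (2*w*(kap * Sn J W))) with (- (2*(kap^2/C^2)) * Sn J W) in H1 by (rewrite <- Hwk; ring).
    lra. }
  assert (Hzero : forall D k, (J < k)%nat -> T D k = (0,0)).
  { intros D k Hk. unfold T, Pr. replace ((J <? k)%nat) with true by (symmetry; apply Nat.ltb_lt; auto). reflexivity. }
  destruct (banach J T c Hc Hcontr Hzero) as [Ds HDs].
  assert (HVd : inVhd per bc J Ds) by (rewrite <- HDs; apply Pr_inVhd; auto).
  assert (HPhi0 : forall eta, inVhd per bc J eta -> Phi lumped per bc varrho J Xm dt Ds eta = 0).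
  { intros eta He. assert (H := Pr_ip per bc J (fun k => vsub (Ds k) (vscal w (Gd Ds k))) eta HJ He).
    change (Pr per bc J (fun k => vsub (Ds k) (vscal w (Gd Ds k)))) with (T Ds) in H.
    rewrite HDs, ipS_lin, HGPhi in H.
    assert (w * Phi lumped per bc varrho J Xm dt Ds eta = 0) by lra.
    apply Rmult_integral in H0. destruct H0; [lra|auto]. }
  exists Ds, (fun i => vscal (1/dt) (Ds i)).
  split; [exact HVd|]. split.
  { intros Hp. destruct HVd as [Hv _]. rewrite (Hv Hp). reflexivity. }
  cbv zeta. split.
  - intros chi Hchi. f_equal. apply functional_extensionality; intro j; apply functional_extensionality; intro rho.
    f_equal. f_equal. f_equal. unfold interp, vadd, vscal, vsub. apply injective_projections; simpl; ring.
  - intros eta He. rewrite bridge by auto.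
    assert (H := HPhi0 eta He). unfold Phi in H. rewrite Bloc_eq in H. lra.
Qed.
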